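(* Consider the controlled network SIS system $\dot x=(-D-H(x)+B-XB)x$, with $B$ irreducible, where $H(x)=\operatorname{diag}(h_1(x_1),\dots,h_n(x_n))$ and each $h_i:[0,1]\to\mathbb{R}_{\ge0}$ is bounded, smooth, monotonically nondecreasing, with $h_i(0)=0$. Suppose $s(-D+B)>0$. Then: (1) in $\Xi_n$ the system has exactly two equilibria, $0_n$, which is unstable, and a unique endemic equilibrium $x^*\in\operatorname{int}(\Xi_n)$, which is locally exponentially stable; (2) for every $x(0)\in\Xi_n\setminus\{0_n\}$, $x(t)\to x^*$ exponentially fast as $t\to\infty$.
   Context: $n\ge2$, $D=\operatorname{diag}(d_1,\dots,d_n)$ with $d_i>0$, $B=(b_{ij})\in\mathbb{R}^{n\times n}$ entrywise nonnegative, $X=\operatorname{diag}(x_1,\dots,x_n)$; componentwise $\dot x_i=-(d_i+h_i(x_i))x_i+(1-x_i)\sum_j b_{ij}x_j$. $B$ irreducible is equivalent to the associated directed graph being strongly connected. $\Xi_n=[0,1]^n$. $s(M)$ denotes the largest real part of the eigenvalues of a square matrix $M$. *)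

(* Defs.v *)
(* classical reals (derivatives, exp). Vectors in R^n are
   functions nat -> R, only indices i < n are meaningful; n x n matrices are
   functions nat -> nat -> R. *)
From Stdlib Require Export Reals Lra Lia Arith.
Open Scope R_scope.

Fixpoint vsum (n : nat) (f : nat -> R) : R :=
  match n with O => 0 | S k => vsum k f + f k end.

Definition vnorm (n : nat) (u : nat -> R) : R := vsum n (fun i => Rabs (u i)).

Definition vsub (u v : nat -> R) : nat -> R := fun i => u i - v i.

Definition veq (n : nat) (u v : nat -> R) : Prop :=
  forall i, (i < n)%nat -> u i = v i.

Definition zerov : nat -> R := fun _ => 0.

Definition mv (n : nat) (M : nat -> nat -> R) (u : nat -> R) : nat -> R :=
  fun i => vsum n (fun j => M i j * u j).

Definition in_Xi (n : nat) (x : nat -> R) : Prop :=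
  forall i, (i < n)%nat -> 0 <= x i <= 1.
Definition in_int_Xi (n : nat) (x : nat -> R) : Prop :=
  forall i, (i < n)%nat -> 0 < x i < 1.

(* (a + i b) is a (complex) eigenvalue of the real n x n matrix M:
   there is a nonzero complex vector u + i v with M(u+iv) = (a+ib)(u+iv). *)
Definition is_eigenvalue (n : nat) (M : nat -> nat -> R) (a b : R) : Prop :=
  exists u v : nat -> R,
    (exists i, (i < n)%nat /\ (u i <> 0 \/ v i <> 0)) /\
    (forall i, (i < n)%nat -> mv n M u i = a * u i - b * v i) /\
    (forall i, (i < n)%nat -> mv n M v i = b * u i + a * v i).

Definition spectral_abscissa (n : nat) (M : nat -> nat -> R) (s : R) : Prop :=
  is_lub (fun a => exists b, is_eigenvalue n M a b) s.

Definition mDpB (d : nat -> R) (B : nat -> nat -> R) : nat -> nat -> R :=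
  fun i j => (if Nat.eqb i j then - d i else 0) + B i j.

Inductive reach (n : nat) (B : nat -> nat -> R) (i : nat) : nat -> Prop :=
| reach_refl : reach n B i i
| reach_step : forall k j, reach n B i k -> (j < n)%nat -> B k j <> 0 ->
    reach n B i j.

(* B irreducible <=> associated digraph strongly connected *)
Definition irreducible (n : nat) (B : nat -> nat -> R) : Prop :=
  forall i j, (i < n)%nat -> (j < n)%nat -> reach n B i j.

(* derivative of f at x relative to the set S (one-sided at boundary points) *)
Definition deriv_on (S : R -> Prop) (f : R -> R) (x l : R) : Prop :=
  limit1_in (fun y => (f y - f x) / (y - x)) (fun y => S y /\ y <> x) l x.

Definition I01 (x : R) : Prop := 0 <= x <= 1.

Definition smooth_on01 (h : R -> R) : Prop :=
  exists Dk : nat -> R -> R,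
    (forall x, I01 x -> Dk O x = h x) /\
    (forall k x, I01 x -> deriv_on I01 (Dk k) x (Dk (S k) x)).

Definition good_h (h : R -> R) : Prop :=
  (forall x, I01 x -> 0 <= h x) /\
  (exists M, forall x, I01 x -> h x <= M) /\
  smooth_on01 h /\
  (forall x y, I01 x -> I01 y -> x <= y -> h x <= h y) /\
  h 0 = 0.

Definition sis_rhs (n : nat) (d : nat -> R) (B : nat -> nat -> R)
  (h : nat -> R -> R) (x : nat -> R) : nat -> R :=
  fun i => - (d i + h i (x i)) * x i + (1 - x i) * mv n B x i.

(* a solution on [0, +oo) of the system, living in Xi_n (the domain of H) *)
Definition is_solution (n : nat) (d : nat -> R) (B : nat -> nat -> R)
  (h : nat -> R -> R) (x : R -> nat -> R) : Prop :=
  forall t, 0 <= t ->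
    in_Xi n (x t) /\
    forall i, (i < n)%nat ->
      deriv_on (fun s => 0 <= s) (fun s => x s i) t (sis_rhs n d B h (x t) i).

Definition is_equilibrium (n : nat) (d : nat -> R) (B : nat -> nat -> R)
  (h : nat -> R -> R) (e : nat -> R) : Prop :=
  in_Xi n e /\ forall i, (i < n)%nat -> sis_rhs n d B h e i = 0.

Definition unstable (n : nat) d B h (e : nat -> R) : Prop :=
  exists eps, 0 < eps /\ forall delta, 0 < delta ->
    exists x, is_solution n d B h x /\ vnorm n (vsub (x 0) e) < delta /\
      exists t, 0 <= t /\ eps <= vnorm n (vsub (x t) e).

Definition loc_exp_stable (n : nat) d B h (e : nat -> R) : Prop :=
  exists delta C gamma, 0 < delta /\ 0 < C /\ 0 < gamma /\
    forall x, is_solution n d B h x -> vnorm n (vsub (x 0) e) < delta ->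
      forall t, 0 <= t ->
        vnorm n (vsub (x t) e) <= C * exp (- gamma * t) * vnorm n (vsub (x 0) e).

(* Main.v *)
Require Import Defs.
From Stdlib Require Import Reals Lra Lia Psatz Classical ClassicalEpsilon.
From Coquelicot Require Import Coquelicot.
Open Scope R_scope.

Lemma vsum_ext n f g : (forall i, (i < n)%nat -> f i = g i) -> vsum n f = vsum n g.
Proof. induction n; simpl; intros H; auto. rewrite IHn by (intros; apply H; lia). rewrite H by lia; auto. Qed.

Lemma vsum_le n f g : (forall i, (i < n)%nat -> f i <= g i) -> vsum n f <= vsum n g.
Proof. induction n; simpl; intros H; [lra|]. assert (f n <= g n) by (apply H; lia).
 assert (vsum n f <= vsum n g) by (apply IHn; intros; apply H; lia). lra. Qed.

Lemma vsum_lt n f g : (n > 0)%nat -> (forall i, (i < n)%nat -> f i < g i) -> vsum n f < vsum n g.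
Proof. destruct n as [|n]; [lia|]. intros _ H; simpl.
 assert (f n < g n) by (apply H; lia).
 assert (vsum n f <= vsum n g) by (apply vsum_le; intros; left; apply H; lia). lra. Qed.

Lemma vsum_0 n : vsum n (fun _ => 0) = 0.
Proof. induction n; simpl; auto. rewrite IHn; ring. Qed.

Lemma vsum_nonneg n f : (forall i, (i < n)%nat -> 0 <= f i) -> 0 <= vsum n f.
Proof. intros H. rewrite <- (vsum_0 n). apply vsum_le; auto. Qed.

Lemma vsum_plus n f g : vsum n (fun i => f i + g i) = vsum n f + vsum n g.
Proof. induction n; simpl; [ring|]. rewrite IHn; ring. Qed.

Lemma vsum_scal n c f : vsum n (fun i => c * f i) = c * vsum n f.
Proof. induction n; simpl; [ring|]. rewrite IHn; ring. Qed.

Lemma vsum_minus n f g : vsum n (fun i => f i - g i) = vsum n f - vsum n g.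
Proof. induction n; simpl; [ring|]. rewrite IHn; ring. Qed.

Lemma vsum_const n c : vsum n (fun _ => c) = INR n * c.
Proof. induction n; simpl vsum; [simpl; ring|]. rewrite IHn, S_INR; ring. Qed.

Lemma vsum_abs n f : Rabs (vsum n f) <= vsum n (fun i => Rabs (f i)).
Proof. induction n; simpl. rewrite Rabs_R0; lra.
 eapply Rle_trans. apply Rabs_triang. lra. Qed.

Lemma vsum_term n f k : (k < n)%nat -> (forall i, (i < n)%nat -> 0 <= f i) -> f k <= vsum n f.
Proof. induction n; intros Hk H; [lia|]. simpl.
 destruct (Nat.eq_dec k n) as [->|].
 - assert (0 <= vsum n f) by (apply vsum_nonneg; intros; apply H; lia). lra.
 - assert (f k <= vsum n f) by (apply IHn; [lia| intros; apply H; lia]).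
   assert (0 <= f n) by (apply H; lia). lra. Qed.

Lemma vnorm_nonneg n u : 0 <= vnorm n u.
Proof. apply vsum_nonneg. intros; apply Rabs_pos. Qed.

Lemma vnorm_term n u k : (k < n)%nat -> Rabs (u k) <= vnorm n u.
Proof. intros; unfold vnorm. apply (vsum_term n (fun i => Rabs (u i))); auto. intros; apply Rabs_pos. Qed.

Lemma mv_scal n M c u i : mv n M (fun j => c * u j) i = c * mv n M u i.
Proof. unfold mv. rewrite <- vsum_scal. apply vsum_ext; intros; ring. Qed.

Lemma fin_small n (P : nat -> R -> Prop) :
  (forall j e e', 0 < e' <= e -> P j e -> P j e') ->
  (forall j, (j < n)%nat -> exists e, 0 < e /\ P j e) ->
  exists e, 0 < e /\ forall j, (j < n)%nat -> P j e.
Proof. intros Hm. induction n; intros H.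
 - exists 1; split; [lra|]; intros; lia.
 - destruct IHn as [e1 [He1 H1]]. intros; apply H; lia.
   destruct (H n) as [e2 [He2 H2]]; [lia|].
   exists (Rmin e1 e2); split. apply Rmin_glb_lt; auto.
   intros j Hj. destruct (Nat.eq_dec j n) as [->|].
   + apply Hm with e2; auto. split. apply Rmin_glb_lt; auto. apply Rmin_r.
   + apply Hm with e1; auto. split. apply Rmin_glb_lt; auto. apply Rmin_l. apply H1; lia.
Qed.

Lemma fin_big n (P : nat -> R -> Prop) :
  (forall j e e', e <= e' -> P j e -> P j e') ->
  (forall j, (j < n)%nat -> exists e, P j e) ->
  exists e, 0 < e /\ forall j, (j < n)%nat -> P j e.
Proof. intros Hm. induction n; intros H.
 - exists 1; split; [lra|]; intros; lia.
 - destruct IHn as [e1 [He1 H1]]. intros; apply H; lia.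
   destruct (H n) as [e2 H2]; [lia|].
   exists (Rmax e1 e2); split. eapply Rlt_le_trans; [apply He1| apply Rmax_l].
   intros j Hj. destruct (Nat.eq_dec j n) as [->|].
   + apply Hm with e2; auto. apply Rmax_r.
   + apply Hm with e1; auto. apply Rmax_l. apply H1; lia.
Qed.

Lemma fin_min_pos n (a : nat -> R) : (forall j, (j < n)%nat -> 0 < a j) ->
  exists m, 0 < m /\ forall j, (j < n)%nat -> m <= a j.
Proof. intros H. apply (fin_small n (fun j m => m <= a j)).
 intros; lra. intros j Hj; exists (a j); split; [apply H; auto| lra]. Qed.

Lemma deriv_on_iff S f t l : deriv_on S f t l <->
  forall eps, 0 < eps -> exists alp, 0 < alp /\ forall y, S y -> y <> t -> Rabs (y - t) < alp ->
    Rabs ((f y - f t) / (y - t) - l) < eps.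
Proof. unfold deriv_on, limit1_in, limit_in; simpl; unfold Rdist. split.
 - intros H eps He. destruct (H eps He) as [a [Ha Ha']]. exists a; split; auto.
 - intros H eps He. destruct (H eps He) as [a [Ha Ha']]. exists a; split; auto.
   intros x [[Hx1 Hx2] Hx3]; auto.
Qed.

Lemma deriv_of_pt_lim S f t l : derivable_pt_lim f t l -> deriv_on S f t l.
Proof. intros H. apply deriv_on_iff. intros eps He. destruct (H eps He) as [dl Hd].
 exists dl; split; [apply cond_pos|]. intros y _ Hy Hyt.
 replace y with (t + (y - t)) at 1 by ring. apply Hd; auto. lra. Qed.

Lemma deriv_on_ext S f g t l : (forall y, S y -> f y = g y) -> f t = g t ->
  deriv_on S f t l -> deriv_on S g t l.
Proof. intros Hfg Ht H. rewrite deriv_on_iff in *. intros eps He.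
 destruct (H eps He) as [a [Ha Ha']]. exists a; split; auto. intros y Sy Hy Hyt.
 rewrite <- Hfg, <- Ht by auto. auto. Qed.

Lemma deriv_on_lin S f g t l m a b : deriv_on S f t l -> deriv_on S g t m ->
  deriv_on S (fun y => a * f y + b * g y) t (a * l + b * m).
Proof. rewrite !deriv_on_iff. intros Hf Hg eps He.
 set (e := eps / (Rabs a + Rabs b + 1)).
 assert (Hpos : 0 < Rabs a + Rabs b + 1) by (pose proof (Rabs_pos a); pose proof (Rabs_pos b); lra).
 assert (He' : 0 < e) by (unfold e; apply Rdiv_lt_0_compat; lra).
 destruct (Hf e He') as [a1 [Ha1 H1]]. destruct (Hg e He') as [a2 [Ha2 H2]].
 exists (Rmin a1 a2); split. apply Rmin_glb_lt; auto.
 intros y Sy Hy Hyt. assert (Hyt1 : Rabs (y - t) < a1) by (eapply Rlt_le_trans; [apply Hyt|apply Rmin_l]).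
 assert (Hyt2 : Rabs (y - t) < a2) by (eapply Rlt_le_trans; [apply Hyt|apply Rmin_r]).
 specialize (H1 y Sy Hy Hyt1). specialize (H2 y Sy Hy Hyt2).
 assert (y - t <> 0) by lra.
 replace ((a * f y + b * g y - (a * f t + b * g t)) / (y - t) - (a * l + b * m)) with
   (a * ((f y - f t) / (y - t) - l) + b * ((g y - g t) / (y - t) - m)) by (field; auto).
 eapply Rle_lt_trans. apply Rabs_triang. rewrite !Rabs_mult.
 assert (Rabs a * Rabs ((f y - f t) / (y - t) - l) <= Rabs a * e) by (apply Rmult_le_compat_l; [apply Rabs_pos|lra]).
 assert (Rabs b * Rabs ((g y - g t) / (y - t) - m) <= Rabs b * e) by (apply Rmult_le_compat_l; [apply Rabs_pos|lra]).
 assert ((Rabs a + Rabs b) * e < eps). { unfold e. apply Rmult_lt_reg_r with (Rabs a + Rabs b + 1); auto.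
   replace ((Rabs a + Rabs b) * (eps / (Rabs a + Rabs b + 1)) * (Rabs a + Rabs b + 1)) with ((Rabs a + Rabs b) * eps) by (field; lra).
   nra. }
 lra.
Qed.

Lemma deriv_left_sign f T l : 0 < T -> deriv_on (fun s => 0 <= s) f T l -> 0 < l ->
  exists dl, 0 < dl /\ forall s, T - dl < s < T -> 0 <= s -> f s < f T.
Proof. rewrite deriv_on_iff. intros HT H Hl. destruct (H l Hl) as [a [Ha H1]].
 exists a; split; auto. intros s Hs Hs0.
 assert (Hq := H1 s Hs0 ltac:(lra) ltac:(rewrite Rabs_left; lra)).
 apply Rabs_def2 in Hq. destruct Hq as [_ Hq].
 set (q := (f s - f T) / (s - T)) in *.
 assert (q * (s - T) = f s - f T) by (unfold q; field; lra).
 nra.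
Qed.

Definition rcont (t0 : R) (f : R -> R) (t : R) : Prop :=
  forall eps, 0 < eps -> exists dl, 0 < dl /\ forall s, t0 <= s -> Rabs (s - t) < dl -> Rabs (f s - f t) < eps.

Lemma deriv_rcont f t l : 0 <= t -> deriv_on (fun s => 0 <= s) f t l -> rcont 0 f t.
Proof. rewrite deriv_on_iff. intros Ht H eps He. destruct (H 1 ltac:(lra)) as [a [Ha H1]].
 set (c := Rabs l + 1). assert (Hc : 0 < c) by (unfold c; pose proof (Rabs_pos l); lra).
 exists (Rmin a (eps / c)); split. apply Rmin_glb_lt; auto. apply Rdiv_lt_0_compat; lra.
 intros s Hs Hst. destruct (Req_dec s t) as [->|Hne]. rewrite Rminus_diag, Rabs_R0; lra.
 assert (Hq := H1 s Hs Hne ltac:(eapply Rlt_le_trans; [apply Hst|apply Rmin_l])).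
 assert (Hst2 : Rabs (s - t) < eps / c) by (eapply Rlt_le_trans; [apply Hst|apply Rmin_r]).
 set (q := (f s - f t) / (s - t)) in *.
 assert (Hqe : f s - f t = q * (s - t)) by (unfold q; field; lra).
 rewrite Hqe, Rabs_mult.
 assert (Rabs q <= c). { unfold c. assert (Rabs q <= Rabs (q - l) + Rabs l).
   { replace q with ((q - l) + l) at 1 by ring. apply Rabs_triang. } lra. }
 assert (Rabs q * Rabs (s - t) <= c * Rabs (s - t)) by (apply Rmult_le_compat_r; [apply Rabs_pos|auto]).
 assert (c * Rabs (s - t) < c * (eps / c)) by (apply Rmult_lt_compat_l; auto).
 replace (c * (eps / c)) with eps in * by (field; lra). lra.
Qed.

Lemma rcont_mono t0 t1 f t : t0 <= t1 -> rcont t0 f t -> rcont t1 f t.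
Proof. intros H Hc eps He. destruct (Hc eps He) as [d [Hd H1]]. exists d; split; auto.
 intros s Hs; apply H1; lra. Qed.

Lemma classic_fin n (P : nat -> Prop) : (forall j, (j < n)%nat -> P j) \/ (exists j, (j < n)%nat /\ ~ P j).
Proof. destruct (classic (exists j, (j < n)%nat /\ ~ P j)) as [H|H]; [right; auto| left].
 intros j Hj. apply NNPP. intros Hn. apply H. exists j; auto. Qed.

Lemma barrier n (z : nat -> R -> R) t0 :
  (forall i t, (i < n)%nat -> t0 <= t -> rcont t0 (z i) t) ->
  (forall i, (i < n)%nat -> 0 < z i t0) ->
  (forall T, t0 < T -> (forall j, (j < n)%nat -> 0 <= z j T) ->
     forall i, (i < n)%nat -> z i T = 0 ->
     exists dl, 0 < dl /\ forall s, T - dl < s < T -> t0 <= s -> z i s < 0) ->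
  forall t i, t0 <= t -> (i < n)%nat -> 0 < z i t.
Proof.
 intros Hc H0 Hb t1 i Ht1 Hi. apply Rnot_le_lt. intros Hbad.
 set (E := fun t => t0 <= t <= t1 /\ forall s, t0 <= s <= t -> forall j, (j < n)%nat -> 0 < z j s).
 assert (HE0 : E t0). { split; [lra|]. intros s Hs j Hj. replace s with t0 by lra. auto. }
 assert (Hbd : bound E). { exists t1. intros x [Hx _]; lra. }
 destruct (completeness E Hbd (ex_intro _ t0 HE0)) as [T [HTu HTl]].
 assert (HT0 : t0 <= T) by (apply HTu; auto).
 assert (HT1 : T <= t1) by (apply HTl; intros x [Hx _]; lra).
 assert (Hb4 : forall s, t0 <= s < T -> forall j, (j < n)%nat -> 0 < z j s).
 { intros s Hs j Hj. destruct (classic (exists e, E e /\ s < e)) as [[e [[He1 He2] Hse]]|Hno].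
   - apply He2; auto; lra.
   - exfalso. assert (T <= s). { apply HTl. intros x Hx. apply Rnot_lt_le. intros Hsx. apply Hno. exists x; auto. }
     lra. }
 assert (HTge : forall j, (j < n)%nat -> 0 <= z j T).
 { intros j Hj. destruct (Req_dec T t0) as [->|HTne]. left; auto.
   apply Rnot_lt_le. intros Hneg. destruct (Hc j T Hj HT0 (- z j T) ltac:(lra)) as [dl [Hdl H1]].
   set (s := Rmax t0 (T - dl / 2)).
   assert (Hs1 : t0 <= s) by apply Rmax_l.
   assert (Hs2 : s < T). { unfold s. apply Rmax_lub_lt; lra. }
   assert (Hs3 : Rabs (s - T) < dl). { rewrite Rabs_left by lra. unfold s.
     assert (T - dl / 2 <= Rmax t0 (T - dl / 2)) by apply Rmax_r. lra. }
   specialize (H1 s Hs1 Hs3). assert (0 < z j s) by (apply Hb4; auto; lra).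
   apply Rabs_def2 in H1. lra. }
 destruct (classic_fin n (fun j => 0 < z j T)) as [Hall|[j [Hj Hnj]]].
 -
   destruct (Req_dec T t1) as [->|HTne]. { specialize (Hall i Hi); lra. }
   destruct (fin_small n (fun j dl => forall s, t0 <= s -> Rabs (s - T) < dl -> 0 < z j s)) as [dl [Hdl H1]].
   { intros j e e' He' Hj s Hs Hs'. apply Hj; auto; lra. }
   { intros j Hj. destruct (Hc j T Hj HT0 (z j T) (Hall j Hj)) as [dl [Hdl H1]]. exists dl; split; auto.
     intros s Hs Hs'. specialize (H1 s Hs Hs'). apply Rabs_def2 in H1. lra. }
   set (T' := Rmin (T + dl / 2) t1).
   assert (HE' : E T'). { split. unfold T'. split; [apply Rmin_glb; lra| apply Rmin_r].
     intros s Hs j Hj. destruct (Rlt_or_le s T). apply Hb4; auto; lra.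
     apply (H1 j Hj s); [lra|]. rewrite Rabs_right by lra.
     assert (Rmin (T + dl / 2) t1 <= T + dl / 2) by apply Rmin_l. unfold T' in Hs. lra. }
   assert (T' <= T) by (apply HTu; auto).
   assert (T < T'). { unfold T'. apply Rmin_glb_lt; lra. } lra.
 - assert (Hz : z j T = 0) by (specialize (HTge j Hj); lra).
   destruct (Req_dec T t0) as [->|HTne]. { specialize (H0 j Hj); lra. }
   destruct (Hb T ltac:(lra) HTge j Hj Hz) as [dl [Hdl H1]].
   set (s := Rmax t0 (T - dl / 2)).
   assert (Hs1 : t0 <= s) by apply Rmax_l.
   assert (Hs2 : s < T). { unfold s. apply Rmax_lub_lt; lra. }
   assert (T - dl < s). { unfold s. assert (T - dl / 2 <= Rmax t0 (T - dl / 2)) by apply Rmax_r. lra. }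
   specialize (H1 s ltac:(lra) Hs1). assert (0 < z j s) by (apply Hb4; auto; lra). lra.
Qed.

Definition sys_ok n (d : nat -> R) (B : nat -> nat -> R) (h : nat -> R -> R) :=
  (forall i, (i < n)%nat -> 0 < d i) /\ (forall i j, (i < n)%nat -> (j < n)%nat -> 0 <= B i j) /\
  (forall i, (i < n)%nat -> good_h (h i)).

Lemma exp_le_mono a b : a <= b -> exp a <= exp b.
Proof. intros [H|H]; [left; apply exp_increasing; auto| subst; lra]. Qed.

Lemma exp_barrier_up a K g T : derivable_pt_lim (fun s => a * (1 + K * exp (- g * s))) T (a * (K * (- g * exp (- g * T)))).
Proof. apply is_derive_Reals. auto_derive; auto. unfold Rminus; ring. Qed.

Lemma exp_barrier_lo a K g t0 T : derivable_pt_lim (fun s => a * (1 - K * exp (- g * (s - t0)))) T (a * K * g * exp (- g * (T - t0))).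
Proof. apply is_derive_Reals. auto_derive; auto. unfold Rminus; ring. Qed.

Lemma mv_le n B u v i : (forall j, (j < n)%nat -> 0 <= B i j) -> (forall j, (j < n)%nat -> u j <= v j) ->
  mv n B u i <= mv n B v i.
Proof. intros HB H. unfold mv. apply vsum_le. intros j Hj. apply Rmult_le_compat_l; auto. Qed.

Lemma up_step d hs hX xs X phi S Sx K e g :
  0 < d -> 0 <= hs -> hs <= hX -> 0 < xs -> X = xs * phi -> X <= 1 ->
  Sx <= phi * S -> (d + hs) * xs = (1 - xs) * S ->
  phi = 1 + K * e -> 0 < K -> 0 < e -> g < S -> 0 < g ->
  0 < xs * (K * (- g * e)) - (- (d + hX) * X + (1 - X) * Sx).
Proof. intros. subst. assert (0 < K * e) by (apply Rmult_lt_0_compat; lra).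
 assert (0 < xs * (1 + K * e)) by (apply Rmult_lt_0_compat; lra).
 assert (Hq1 : (d + hs) * (xs * (1 + K * e)) <= (d + hX) * (xs * (1 + K * e))) by (apply Rmult_le_compat_r; nra).
 assert (Hq2 : (1 - xs * (1 + K * e)) * Sx <= (1 - xs * (1 + K * e)) * ((1 + K * e) * S)) by (apply Rmult_le_compat_l; nra).
 assert (Hq3 : 0 < xs * K * e) by (apply Rmult_lt_0_compat; [nra|auto]).
 assert (Hq4 : 0 < (1 + K * e) * S - g) by nra.
 assert (Hq5 : 0 < (xs * K * e) * ((1 + K * e) * S - g)) by (apply Rmult_lt_0_compat; auto).
 assert (E : (d + hs) * (xs * (1 + K * e)) = (1 + K * e) * ((1 - xs) * S)) by (rewrite <- H6; ring).
 lra. Qed.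

Lemma lo_step d hs hX xs X psi S Sx K e g :
  0 < d -> 0 <= hX -> hX <= hs -> 0 < xs -> X = xs * psi -> 0 <= X <= 1 ->
  psi * S <= Sx -> (d + hs) * xs = (1 - xs) * S ->
  psi = 1 - K * e -> 0 < K -> 0 < e -> g < psi * S ->
  0 < (- (d + hX) * X + (1 - X) * Sx) - xs * K * g * e.
Proof. intros. subst. assert (0 < K * e) by (apply Rmult_lt_0_compat; lra).
 assert (Hq1 : (d + hX) * (xs * (1 - K * e)) <= (d + hs) * (xs * (1 - K * e))) by (apply Rmult_le_compat_r; nra).
 assert (Hq2 : (1 - xs * (1 - K * e)) * ((1 - K * e) * S) <= (1 - xs * (1 - K * e)) * Sx) by (apply Rmult_le_compat_l; nra).
 assert (Hq3 : 0 < xs * K * e) by (apply Rmult_lt_0_compat; [nra|auto]).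
 assert (Hq5 : 0 < (xs * K * e) * ((1 - K * e) * S - g)) by (apply Rmult_lt_0_compat; lra).
 assert (E : (d + hs) * (xs * (1 - K * e)) = (1 - K * e) * ((1 - xs) * S)) by (rewrite <- H6; ring).
 lra. Qed.

Lemma upper_bound n d B h xs c x K g :
  sys_ok n d B h -> is_equilibrium n d B h xs -> in_int_Xi n xs ->
  (forall i, (i < n)%nat -> c <= mv n B xs i) ->
  is_solution n d B h x -> 0 < K -> 0 < g -> g < c ->
  (forall i, (i < n)%nat -> x 0 i < xs i * (1 + K)) ->
  forall t i, 0 <= t -> (i < n)%nat -> x t i < xs i * (1 + K * exp (- g * t)).
Proof.
 intros [Hd [HB Hh]] [Hxe Heq] Hint Hc Hsol HK Hg Hgc H0 t i Ht Hi.
 set (z := fun j s => xs j * (1 + K * exp (- g * s)) - x s j).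
 assert (Hder : forall j s, (j < n)%nat -> 0 <= s -> deriv_on (fun s => 0 <= s) (z j) s
     (xs j * (K * (- g * exp (- g * s))) - sis_rhs n d B h (x s) j)).
 { intros j s Hj Hs. destruct (Hsol s Hs) as [_ Hs2].
   pose proof (deriv_on_lin _ _ _ s _ _ 1 (-1) (deriv_of_pt_lim (fun s => 0 <= s) _ _ _ (exp_barrier_up (xs j) K g s)) (Hs2 j Hj)) as HH.
   eapply deriv_on_ext; [| |replace (xs j * (K * (- g * exp (- g * s))) - sis_rhs n d B h (x s) j) with
     (1 * (xs j * (K * (- g * exp (- g * s)))) + -1 * sis_rhs n d B h (x s) j) by ring; apply HH].
   intros; unfold z; ring. unfold z; ring. }
 enough (0 < z i t) by (unfold z in *; lra).
 apply (barrier n z 0); auto.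
 - intros j s Hj Hs. eapply deriv_rcont; eauto.
 - intros j Hj. unfold z. rewrite Rmult_0_r, exp_0, Rmult_1_r. specialize (H0 j Hj). lra.
 - intros T HT Hall j Hj Hz.
   destruct (deriv_left_sign (z j) T _ HT (Hder j T Hj ltac:(lra))) as [dl [Hdl H1]].
   { destruct (Hsol T ltac:(lra)) as [HxT _].
     destruct (Hh j Hj) as [Hh0 [_ [_ [Hmono _]]]].
     assert (Hxsj := Hint j Hj).
     assert (F1 : 0 <= h j (xs j)) by (apply Hh0; unfold I01; lra).
     assert (Fe : 0 <= K * exp (- g * T)) by (apply Rmult_le_pos; [lra| left; apply exp_pos]).
     assert (F3 : x T j = xs j * (1 + K * exp (- g * T))) by (unfold z in Hz; lra).
     assert (F4 : x T j <= 1) by (apply HxT; auto).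
     assert (F2 : h j (xs j) <= h j (x T j)) by (apply Hmono; unfold I01; try lra; try (apply HxT; auto); nra).
     assert (F5 : mv n B (x T) j <= (1 + K * exp (- g * T)) * mv n B xs j).
     { rewrite <- mv_scal. apply mv_le. intros; apply HB; auto. intros l Hl. specialize (Hall l Hl). unfold z in Hall. lra. }
     assert (F6 : (d j + h j (xs j)) * xs j = (1 - xs j) * mv n B xs j).
     { specialize (Heq j Hj). unfold sis_rhs in Heq. lra. }
     assert (F7 : g < mv n B xs j) by (specialize (Hc j Hj); lra).
     unfold sis_rhs. exact (up_step (d j) (h j (xs j)) (h j (x T j)) (xs j) (x T j) (1 + K * exp (- g * T))
        (mv n B xs j) (mv n B (x T) j) K (exp (- g * T)) g (Hd j Hj) F1 F2 (proj1 Hxsj) F3 F4 F5 F6 eq_refl HK (exp_pos _) F7 Hg). }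
   exists dl; split; auto. intros s Hs Hs0. specialize (H1 s Hs Hs0). lra.
Qed.

Lemma lower_bound n d B h xs c x K g t0 :
  sys_ok n d B h -> is_equilibrium n d B h xs -> in_int_Xi n xs ->
  (forall i, (i < n)%nat -> c <= mv n B xs i) ->
  is_solution n d B h x -> 0 < K < 1 -> 0 < g -> g < (1 - K) * c -> 0 <= t0 ->
  (forall i, (i < n)%nat -> xs i * (1 - K) < x t0 i) ->
  forall t i, t0 <= t -> (i < n)%nat -> xs i * (1 - K * exp (- g * (t - t0))) < x t i.
Proof.
 intros [Hd [HB Hh]] [Hxe Heq] Hint Hc Hsol HK Hg Hgc Ht0 H0 t i Ht Hi.
 set (z := fun j s => x s j - xs j * (1 - K * exp (- g * (s - t0)))).
 assert (Hder : forall j s, (j < n)%nat -> 0 <= s -> deriv_on (fun s => 0 <= s) (z j) s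
     (sis_rhs n d B h (x s) j - xs j * K * g * exp (- g * (s - t0)))).
 { intros j s Hj Hs. destruct (Hsol s Hs) as [_ Hs2].
   pose proof (deriv_on_lin _ _ _ s _ _ 1 (-1) (Hs2 j Hj) (deriv_of_pt_lim (fun s => 0 <= s) _ _ _ (exp_barrier_lo (xs j) K g t0 s))) as HH.
   eapply deriv_on_ext; [| |replace (sis_rhs n d B h (x s) j - xs j * K * g * exp (- g * (s - t0))) with
     (1 * sis_rhs n d B h (x s) j + -1 * (xs j * K * g * exp (- g * (s - t0)))) by ring; apply HH].
   intros; unfold z; ring. unfold z; ring. }
 enough (0 < z i t) by (unfold z in *; lra).
 apply (barrier n z t0); auto.
 - intros j s Hj Hs. apply rcont_mono with 0; auto. eapply deriv_rcont; [|apply Hder]; auto; lra.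
 - intros j Hj. unfold z. rewrite Rminus_diag, Rmult_0_r, exp_0, Rmult_1_r. specialize (H0 j Hj). lra.
 - intros T HT Hall j Hj Hz.
   assert (HT0 : 0 < T) by lra.
   assert (He1 : exp (- g * (T - t0)) <= 1). { rewrite <- exp_0. apply exp_le_mono. nra. }
   assert (He0 := exp_pos (- g * (T - t0))).
   destruct (deriv_left_sign (z j) T _ HT0 (Hder j T Hj ltac:(lra))) as [dl [Hdl H1]].
   { destruct (Hsol T ltac:(lra)) as [HxT _].
     destruct (Hh j Hj) as [Hh0 [_ [_ [Hmono _]]]].
     assert (Hxsj := Hint j Hj).
     set (e := exp (- g * (T - t0))) in *.
     assert (Fe : 0 <= K * e) by (apply Rmult_le_pos; lra).
     assert (F3 : x T j = xs j * (1 - K * e)) by (unfold z in Hz; unfold e; lra).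
     assert (F4 : 0 <= x T j <= 1) by (apply HxT; auto).
     assert (F1 : 0 <= h j (x T j)) by (apply Hh0; unfold I01; lra).
     assert (F2 : h j (x T j) <= h j (xs j)) by (apply Hmono; unfold I01; try lra; nra).
     assert (F5 : (1 - K * e) * mv n B xs j <= mv n B (x T) j).
     { rewrite <- mv_scal. apply mv_le. intros; apply HB; auto. intros l Hl. specialize (Hall l Hl). unfold z in Hall. unfold e; lra. }
     assert (F6 : (d j + h j (xs j)) * xs j = (1 - xs j) * mv n B xs j).
     { specialize (Heq j Hj). unfold sis_rhs in Heq. lra. }
     assert (F7 : g < (1 - K * e) * mv n B xs j).
     { specialize (Hc j Hj). assert (0 <= c) by nra.
       assert ((1 - K) * c <= (1 - K * e) * mv n B xs j) by (apply Rmult_le_compat; nra). lra. }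
     unfold sis_rhs. exact (lo_step (d j) (h j (xs j)) (h j (x T j)) (xs j) (x T j) (1 - K * e)
        (mv n B xs j) (mv n B (x T) j) K e g (Hd j Hj) F1 F2 (proj1 Hxsj) F3 F4 F5 F6 eq_refl (proj1 HK) He0 F7). }
   exists dl; split; auto. intros s Hs Hs0. assert (0 <= s) by lra. specialize (H1 s Hs H). lra.
Qed.

Lemma reach_lt n B i j : reach n B i j -> (i < n)%nat -> (j < n)%nat.
Proof. induction 1; auto. Qed.

Lemma mv_nonneg n B u i : (forall j, (j < n)%nat -> 0 <= B i j) -> (forall j, (j < n)%nat -> 0 <= u j) -> 0 <= mv n B u i.
Proof. intros; unfold mv; apply vsum_nonneg; intros; apply Rmult_le_pos; auto. Qed.

Lemma mv_term n B u i j : (j < n)%nat -> (forall j, (j < n)%nat -> 0 <= B i j) -> (forall j, (j < n)%nat -> 0 <= u j) ->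
  B i j * u j <= mv n B u i.
Proof. intros; unfold mv. apply (vsum_term n (fun j => B i j * u j)); auto. intros; apply Rmult_le_pos; auto. Qed.

Lemma propagate n d B h x T i j : sys_ok n d B h -> is_solution n d B h x -> 0 < T ->
  (i < n)%nat -> (j < n)%nat -> B i j <> 0 -> 0 < x T j -> 0 < x T i.
Proof. intros [Hd [HB Hh]] Hsol HT Hi Hj HBij Hxj.
 destruct (Hsol T ltac:(lra)) as [HxT Hder].
 destruct (HxT i Hi) as [[Hpos|Hz] _]; auto. exfalso.
 assert (Hrhs : 0 < sis_rhs n d B h (x T) i).
 { unfold sis_rhs. rewrite <- Hz. assert (0 < B i j) by (destruct (HB i j Hi Hj); auto; congruence).
   assert (B i j * x T j <= mv n B (x T) i) by (apply mv_term; auto; intros; apply HxT; auto).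
   assert (0 < B i j * x T j) by (apply Rmult_lt_0_compat; auto). lra. }
 destruct (deriv_left_sign _ T _ HT (Hder i Hi) Hrhs) as [dl [Hdl H1]].
 set (s := Rmax (T / 2) (T - dl / 2)).
 assert (T / 2 <= s) by apply Rmax_l. assert (T - dl / 2 <= s) by apply Rmax_r.
 assert (s < T) by (apply Rmax_lub_lt; lra).
 specialize (H1 s ltac:(lra) ltac:(lra)).
 destruct (Hsol s ltac:(lra)) as [Hxs _]. specialize (Hxs i Hi). lra.
Qed.

Lemma all_positive n d B h x T k : sys_ok n d B h -> irreducible n B -> is_solution n d B h x -> 0 < T ->
  (k < n)%nat -> 0 < x T k -> forall i, (i < n)%nat -> 0 < x T i.
Proof. intros Hok Hirr Hsol HT Hk Hxk i Hi.
 assert (H : forall j, reach n B i j -> 0 < x T j -> 0 < x T i).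
 { induction 1 as [|k' j Hr IH Hj Hb]; auto. intros Hxj. apply IH.
   apply (propagate n d B h x T k' j); auto. eapply reach_lt; eauto. }
 apply (H k); auto. Qed.

Lemma exp_decay_der a c T : derivable_pt_lim (fun s => a * exp (- c * s)) T (a * (- c * exp (- c * T))).
Proof. apply is_derive_Reals. auto_derive; auto. ring. Qed.

Lemma persist n d B h x k : sys_ok n d B h -> is_solution n d B h x -> (k < n)%nat -> 0 < x 0 k ->
  forall t, 0 <= t -> 0 < x t k.
Proof. intros [Hd [HB Hh]] Hsol Hk H0 t Ht.
 destruct (Hh k Hk) as [Hh0 [[M HM] _]].
 set (q := x 0 k / 2). set (c := d k + M + 1).
 assert (HM0 : 0 <= M) by (eapply Rle_trans; [apply (Hh0 0); unfold I01; lra| apply HM; unfold I01; lra]).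
 set (z := fun (_ : nat) s => x s k - q * exp (- c * s)).
 assert (Hder : forall s, 0 <= s -> deriv_on (fun s => 0 <= s) (z 0%nat) s
     (sis_rhs n d B h (x s) k - q * (- c * exp (- c * s)))).
 { intros s Hs. destruct (Hsol s Hs) as [_ Hs2].
   pose proof (deriv_on_lin _ _ _ s _ _ 1 (-1) (Hs2 k Hk) (deriv_of_pt_lim (fun s => 0 <= s) _ _ _ (exp_decay_der q c s))) as HH.
   eapply deriv_on_ext; [| |replace (sis_rhs n d B h (x s) k - q * (- c * exp (- c * s))) with
     (1 * sis_rhs n d B h (x s) k + -1 * (q * (- c * exp (- c * s)))) by ring; apply HH].
   intros; unfold z; ring. unfold z; ring. }
 assert (Hq : 0 < q) by (unfold q; lra).
 enough (0 < z 0%nat t) by (unfold z in *; assert (0 < q * exp (- c * t)) by (apply Rmult_lt_0_compat; auto; apply exp_pos); lra).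
 apply (barrier 1 z 0); auto.
 - intros j s Hj Hs. replace j with 0%nat by lia. eapply deriv_rcont; eauto.
 - intros j Hj. replace j with 0%nat by lia. unfold z. rewrite Rmult_0_r, exp_0. unfold q; lra.
 - intros T HT Hall j Hj Hz. replace j with 0%nat in * by lia.
   destruct (deriv_left_sign (z 0%nat) T _ HT (Hder T ltac:(lra))) as [dl [Hdl H1]].
   { destruct (Hsol T ltac:(lra)) as [HxT _].
     assert (HxTk : x T k = q * exp (- c * T)) by (unfold z in Hz; lra).
     assert (Hpos : 0 < x T k) by (rewrite HxTk; apply Rmult_lt_0_compat; auto; apply exp_pos).
     assert (F1 := HxT k Hk).
     assert (Fh : h k (x T k) <= M) by (apply HM; unfold I01; lra).
     assert (Fm : 0 <= mv n B (x T) k) by (apply mv_nonneg; intros; [apply HB|apply HxT]; auto).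
     unfold sis_rhs.
     assert (E : q * (- c * exp (- c * T)) = - c * x T k) by (rewrite HxTk; ring).
     rewrite E.
     assert ((d k + h k (x T k)) * x T k <= (d k + M) * x T k) by (apply Rmult_le_compat_r; lra).
     assert (0 <= (1 - x T k) * mv n B (x T) k) by (apply Rmult_le_pos; lra).
     unfold c. nra. }
   exists dl; split; auto. intros s Hs Hs0. specialize (H1 s Hs Hs0). lra.
Qed.

Lemma exp_small C g eta : 0 < g -> 0 < eta -> exists t, 0 <= t /\ C * exp (- g * t) < eta.
Proof. intros Hg He. destruct (Rle_or_lt C 0) as [HC|HC].
 - exists 0. split; [lra|]. assert (0 < exp (- g * 0)) by apply exp_pos. nra.
 - set (t := Rmax 0 (ln (C / eta) / g + 1)). exists t. split; [apply Rmax_l|].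
   assert (Ht : ln (C / eta) / g + 1 <= t) by apply Rmax_r.
   assert (H1 : - g * t < ln (eta / C)).
   { assert (ln (eta / C) = - ln (C / eta)).
     { rewrite <- ln_Rinv. f_equal. field. lra. apply Rdiv_lt_0_compat; lra. }
     assert (g * (ln (C / eta) / g + 1) <= g * t) by (apply Rmult_le_compat_l; lra).
     replace (g * (ln (C / eta) / g + 1)) with (ln (C / eta) + g) in * by (field; lra). lra. }
   apply exp_increasing in H1. rewrite exp_ln in H1 by (apply Rdiv_lt_0_compat; lra).
   apply Rmult_lt_compat_l with (r := C) in H1; auto. replace (C * (eta / C)) with eta in H1 by (field; lra). lra.
Qed.

Lemma S_pos n d B h xs i : sys_ok n d B h -> is_equilibrium n d B h xs -> in_int_Xi n xs -> (i < n)%nat ->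
  0 < mv n B xs i.
Proof. intros [Hd [HB Hh]] [_ Heq] Hint Hi. specialize (Heq i Hi). unfold sis_rhs in Heq.
 destruct (Hh i Hi) as [Hh0 _]. assert (0 <= h i (xs i)) by (apply Hh0; unfold I01; specialize (Hint i Hi); lra).
 specialize (Hint i Hi). specialize (Hd i Hi).
 assert (0 < (d i + h i (xs i)) * xs i) by (apply Rmult_lt_0_compat; lra).
 apply Rnot_le_lt; intros HS. assert (0 <= (1 - xs i) * - mv n B xs i) by (apply Rmult_le_pos; lra). lra.
Qed.

Lemma abs_bound_le a b : a - b <= 0 -> 0 <= a -> 0 <= b -> b <= 1 -> Rabs (a - b) <= 1.
Proof. intros. rewrite Rabs_left1; lra. Qed.

Lemma global_conv n d B h xs x : sys_ok n d B h -> irreducible n B ->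
  is_equilibrium n d B h xs -> in_int_Xi n xs -> is_solution n d B h x -> ~ veq n (x 0) zerov ->
  exists C gamma, 0 < gamma /\ forall t, 0 <= t -> vnorm n (vsub (x t) xs) <= C * exp (- gamma * t).
Proof.
 intros Hok Hirr Heq Hint Hsol Hnz.
 assert (Hk : exists k, (k < n)%nat /\ x 0 k <> 0).
 { apply NNPP; intros Hn; apply Hnz. intros k Hk. unfold zerov. apply NNPP; intros Hne. apply Hn; exists k; auto. }
 destruct Hk as [k [Hk Hxk]].
 destruct (Hsol 0 ltac:(lra)) as [Hx0 _].
 assert (Hxk0 : 0 < x 0 k) by (destruct (Hx0 k Hk) as [[H|H] _]; auto; congruence).
 assert (Hx1k := persist n d B h x k Hok Hsol Hk Hxk0 1 ltac:(lra)).
 assert (Hx1 := all_positive n d B h x 1 k Hok Hirr Hsol ltac:(lra) Hk Hx1k).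
 destruct (fin_min_pos n (fun i => x 1 i) Hx1) as [p [Hp Hpi]].
 destruct (Hsol 1 ltac:(lra)) as [HX1 _].
 assert (Hp1 : p <= 1) by (specialize (Hpi k Hk); specialize (HX1 k Hk); lra).
 destruct (fin_min_pos n xs) as [m [Hm Hmi]]. { intros; apply Hint; auto. }
 destruct (fin_min_pos n (fun i => mv n B xs i)) as [c [Hc Hci]]. { intros; eapply S_pos; eauto. }
 set (g1 := c / 2). set (g2 := p * c / 4).
 assert (Hup := upper_bound n d B h xs c x (1 / m) g1 Hok Heq Hint Hci Hsol ltac:(apply Rdiv_lt_0_compat; lra)
   ltac:(unfold g1; lra) ltac:(unfold g1; lra)).
 assert (Hlo := lower_bound n d B h xs c x (1 - p / 2) g2 1 Hok Heq Hint Hci Hsol ltac:(lra)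
   ltac:(unfold g2; apply Rdiv_lt_0_compat; [apply Rmult_lt_0_compat|]; lra) ltac:(unfold g2; nra) ltac:(lra)).
 assert (Hup0 : forall i, (i < n)%nat -> x 0 i < xs i * (1 + 1 / m)).
 { intros i Hi. specialize (Hmi i Hi). specialize (Hx0 i Hi). specialize (Hint i Hi).
   assert (1 <= xs i * (1 / m)) by (replace (xs i * (1 / m)) with (xs i / m) by (field; lra);
     apply Rmult_le_reg_r with m; auto; unfold Rdiv; rewrite Rmult_assoc, Rinv_l; lra). lra. }
 assert (Hlo0 : forall i, (i < n)%nat -> xs i * (1 - (1 - p / 2)) < x 1 i).
 { intros i Hi. specialize (Hpi i Hi). specialize (Hint i Hi). nra. }
 specialize (Hup Hup0). specialize (Hlo Hlo0).
 exists (INR n * (1 / m + exp g2)), g2. split. unfold g2; apply Rdiv_lt_0_compat; [apply Rmult_lt_0_compat|]; lra.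
 intros t Ht. unfold vnorm. rewrite Rmult_assoc, <- vsum_const. apply vsum_le. intros i Hi.
 unfold vsub. rewrite Rmult_plus_distr_r.
 assert (Hxs := Hint i Hi). destruct (Hsol t Ht) as [HXt _]. assert (Hxt := HXt i Hi).
 assert (E1 : exp g2 * exp (- g2 * t) = exp (- g2 * (t - 1))) by (rewrite <- exp_plus; f_equal; ring).
 assert (Hg2 : 0 < g2) by (unfold g2; apply Rdiv_lt_0_compat; [apply Rmult_lt_0_compat|]; lra).
 assert (Hm1 : 0 < 1 / m) by (apply Rdiv_lt_0_compat; lra).
 assert (Hee := exp_pos (- g2 * t)).
 destruct (Rle_or_lt 1 t) as [Ht1|Ht1].
 - assert (U := Hup t i Ht Hi). assert (L := Hlo t i Ht1 Hi).
   assert (Ex : exp (- g1 * t) <= exp (- g2 * t)). { apply exp_le_mono. assert (g2 <= g1) by (unfold g1, g2; nra). assert (g2 * t <= g1 * t) by (apply Rmult_le_compat_r; lra). lra. }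
   assert (U' : x t i - xs i < 1 / m * exp (- g2 * t)).
   { assert (xs i * (1 / m * exp (- g1 * t)) <= 1 * (1 / m * exp (- g2 * t))).
     { apply Rmult_le_compat; try lra. apply Rmult_le_pos; [lra| left; apply exp_pos]. apply Rmult_le_compat_l; lra. }
     lra. }
   assert (L' : xs i - x t i < exp g2 * exp (- g2 * t)).
   { rewrite E1. assert (0 < exp (- g2 * (t - 1))) by apply exp_pos.
     assert (xs i * ((1 - p / 2) * exp (- g2 * (t - 1))) <= 1 * (1 * exp (- g2 * (t - 1)))).
     { apply Rmult_le_compat; try lra. apply Rmult_le_pos; lra. apply Rmult_le_compat_r; lra. }
     lra. }
   assert (0 < 1 / m * exp (- g2 * t)) by (apply Rmult_lt_0_compat; lra).
   assert (0 < exp g2 * exp (- g2 * t)) by (apply Rmult_lt_0_compat; [apply exp_pos|lra]).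
   apply Rabs_le; lra.
 - assert (1 <= exp g2 * exp (- g2 * t)). { rewrite E1. assert (0 <= g2 * (1 - t)) by (apply Rmult_le_pos; lra). assert (Hq : 0 <= - g2 * (t - 1)) by lra. apply exp_le_mono in Hq. rewrite exp_0 in Hq. lra. }
   assert (0 < 1 / m * exp (- g2 * t)) by (apply Rmult_lt_0_compat; lra).
   assert (Rabs (x t i - xs i) <= 1) by (apply Rabs_le; lra). lra.
Qed.

Lemma eps_le a b : (forall e, 0 < e < 1 / 4 -> a < b + e) -> a <= b.
Proof. intros H. apply Rnot_lt_le; intros Hab.
 set (e := Rmin ((a - b) / 2) (1 / 8)).
 assert (e <= (a - b) / 2) by apply Rmin_l. assert (e <= 1/8) by apply Rmin_r.
 assert (0 < e) by (apply Rmin_glb_lt; lra). specialize (H e ltac:(lra)). lra. Qed.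

Lemma loc_stab n d B h xs : (0 < n)%nat -> sys_ok n d B h ->
  is_equilibrium n d B h xs -> in_int_Xi n xs -> loc_exp_stable n d B h xs.
Proof.
 intros Hn Hok Heq Hint.
 destruct (fin_min_pos n xs) as [m [Hm Hmi]]. { intros; apply Hint; auto. }
 destruct (fin_min_pos n (fun i => mv n B xs i)) as [c [Hc Hci]]. { intros; eapply S_pos; eauto. }
 assert (HnR : 0 < INR n) by (apply lt_0_INR; auto).
 exists (m / 4), (INR n / m), (c / 4). split; [lra|]. split; [apply Rdiv_lt_0_compat; lra|]. split; [lra|].
 intros x Hsol HV t Ht. set (V0 := vnorm n (vsub (x 0) xs)) in *.
 assert (HV0 : 0 <= V0) by apply vnorm_nonneg.
 unfold vnorm at 1. replace (INR n / m * exp (- (c / 4) * t) * V0) with (INR n * (V0 / m * exp (- (c / 4) * t))) by (field; lra).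
 rewrite <- vsum_const. apply vsum_le. intros i Hi. unfold vsub.
 assert (Hxs := Hint i Hi). assert (Hmi' := Hmi i Hi).
 assert (HVi : Rabs (x 0 i - xs i) <= V0) by (apply (vnorm_term n (vsub (x 0) xs)); auto).
 assert (HV0m : V0 / m < 1 / 4) by (apply Rmult_lt_reg_r with m; auto; unfold Rdiv; rewrite Rmult_assoc, Rinv_l; lra).
 assert (HV0m' : 0 <= V0 / m) by (apply Rmult_le_pos; auto; left; apply Rinv_0_lt_compat; lra).
 assert (Hxsm : V0 <= xs i * (V0 / m)).
 { replace V0 with (m * (V0 / m)) at 1 by (field; lra). apply Rmult_le_compat_r; lra. }
 assert (Hee := exp_pos (- (c / 4) * t)).
 assert (He1 : exp (- (c / 4) * t) <= 1) by (rewrite <- exp_0; apply exp_le_mono; nra).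
 apply eps_le. intros e He.
 set (K := V0 / m + e).
 assert (HK : 0 < K < 1 / 2) by (unfold K; lra).
 assert (Hup := upper_bound n d B h xs c x K (c / 4) Hok Heq Hint Hci Hsol ltac:(lra) ltac:(lra) ltac:(lra)).
 assert (Hlo := lower_bound n d B h xs c x K (c / 4) 0 Hok Heq Hint Hci Hsol ltac:(lra) ltac:(lra) ltac:(nra) ltac:(lra)).
 assert (Hpre : forall j, (j < n)%nat -> Rabs (x 0 j - xs j) < xs j * K).
 { intros j Hj. assert (Rabs (x 0 j - xs j) <= V0) by (apply (vnorm_term n (vsub (x 0) xs)); auto).
   assert (V0 <= xs j * (V0 / m)).
   { replace V0 with (m * (V0 / m)) at 1 by (field; lra). apply Rmult_le_compat_r; auto. }
   assert (0 < xs j * e) by (apply Rmult_lt_0_compat; [exact (proj1 (Hint j Hj))|]; lra).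
   unfold K. lra. }
 assert (U := Hup ltac:(intros j Hj; specialize (Hpre j Hj); apply Rabs_def2 in Hpre; lra) t i Ht Hi).
 assert (L := Hlo ltac:(intros j Hj; specialize (Hpre j Hj); apply Rabs_def2 in Hpre; lra) t i Ht Hi).
 rewrite Rminus_0_r in L.
 assert (xs i * (K * exp (- (c / 4) * t)) <= 1 * (K * exp (- (c / 4) * t))).
 { apply Rmult_le_compat_r; [apply Rmult_le_pos; lra| lra]. }
 assert (K * exp (- (c / 4) * t) <= V0 / m * exp (- (c / 4) * t) + e).
 { unfold K. assert (e * exp (- (c / 4) * t) <= e * 1) by (apply Rmult_le_compat_l; lra). lra. }
 apply Rabs_def1; lra.
Qed.

Lemma const_solution n d B h e : is_equilibrium n d B h e -> is_solution n d B h (fun _ => e).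
Proof. intros [He Heq] t Ht. split; auto. intros i Hi. rewrite Heq by auto.
 apply deriv_of_pt_lim. apply derivable_pt_lim_const. Qed.

Lemma uniq_eq n d B h xs e : sys_ok n d B h -> irreducible n B ->
  is_equilibrium n d B h xs -> in_int_Xi n xs -> is_equilibrium n d B h e -> ~ veq n e zerov -> veq n e xs.
Proof. intros Hok Hirr Hxs Hint He Hnz.
 destruct (global_conv n d B h xs (fun _ => e) Hok Hirr Hxs Hint (const_solution _ _ _ _ _ He) Hnz) as [C [g [Hg H]]].
 assert (Hv : vnorm n (vsub e xs) = 0).
 { destruct (vnorm_nonneg n (vsub e xs)) as [Hp|Hp]; auto. exfalso.
   destruct (exp_small C g _ Hg Hp) as [t [Ht Ht']]. specialize (H t Ht). lra. }
 intros i Hi. assert (Hq := vnorm_term n (vsub e xs) i Hi). rewrite Hv in Hq. unfold vsub in Hq.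
 assert (Rabs (e i - xs i) = 0) by (pose proof (Rabs_pos (e i - xs i)); lra).
 apply Rabs_eq_0 in H0. lra.
Qed.

Lemma unstable0 n d B h xs : (0 < n)%nat -> sys_ok n d B h -> irreducible n B ->
  is_equilibrium n d B h xs -> in_int_Xi n xs ->
  (forall x0, in_Xi n x0 -> exists x, is_solution n d B h x /\ forall i, (i < n)%nat -> x 0 i = x0 i) ->
  unstable n d B h zerov.
Proof. intros Hn Hok Hirr Hxs Hint Hex.
 assert (Hvx : 0 < vnorm n xs). { eapply Rlt_le_trans; [|apply (vnorm_term n xs 0%nat Hn)].
   rewrite Rabs_right; [apply Hint; auto| left; apply Hint; auto]. }
 exists (vnorm n xs / 2). split; [lra|]. intros delta Hdel.
 assert (HnR : 0 < INR n) by (apply lt_0_INR; auto).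
 set (q := Rmin (delta / (2 * INR n)) (1 / 2)).
 assert (Hq0 : 0 < q) by (apply Rmin_glb_lt; [apply Rdiv_lt_0_compat|]; lra).
 assert (Hq1 : q <= 1 / 2) by apply Rmin_r.
 assert (Hq2 : q <= delta / (2 * INR n)) by apply Rmin_l.
 destruct (Hex (fun _ => q)) as [x [Hsol H0]]. { intros i Hi; lra. }
 exists x. split; auto. split.
 - unfold vnorm, vsub, zerov. rewrite (vsum_ext n _ (fun _ => q)). rewrite vsum_const.
   assert (INR n * q <= INR n * (delta / (2 * INR n))) by (apply Rmult_le_compat_l; lra).
   replace (INR n * (delta / (2 * INR n))) with (delta / 2) in * by (field; lra). lra.
   intros i Hi. rewrite H0 by auto. rewrite Rminus_0_r, Rabs_right; lra.
 - assert (Hnz : ~ veq n (x 0) zerov). { intros Hv. specialize (Hv 0%nat Hn). rewrite H0 in Hv by auto. unfold zerov in Hv. lra. }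
   destruct (global_conv n d B h xs x Hok Hirr Hxs Hint Hsol Hnz) as [C [g [Hg H]]].
   destruct (exp_small C g (vnorm n xs / 2) Hg ltac:(lra)) as [t [Ht Ht']].
   exists t. split; auto. specialize (H t Ht).
   assert (vnorm n xs <= vnorm n (vsub (x t) zerov) + vnorm n (vsub (x t) xs)).
   { unfold vnorm. rewrite <- vsum_plus. apply vsum_le. intros i Hi. unfold vsub, zerov.
     replace (xs i) with (- (x t i - 0 - xs i) + (x t i - 0)) at 1 by ring.
     eapply Rle_trans; [apply Rabs_triang|]. rewrite Rabs_Ropp. replace (x t i - 0 - xs i) with (x t i - xs i) by ring. lra. }
   lra.
Qed.

Lemma vsum_delta n k f : (k < n)%nat -> vsum n (fun j => if Nat.eqb k j then f j else 0) = f k.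
Proof. induction n; intros Hk; [lia|]. simpl. destruct (Nat.eq_dec k n) as [->|Hne].
 - rewrite Nat.eqb_refl. rewrite (vsum_ext n _ (fun _ => 0)). rewrite vsum_0; ring.
   intros i Hi. destruct (Nat.eqb_spec n i); [lia|auto].
 - rewrite IHn by lia. destruct (Nat.eqb_spec k n); [lia|ring]. Qed.

Lemma mv_mDpB n d B u k : (k < n)%nat -> mv n (mDpB d B) u k = - d k * u k + mv n B u k.
Proof. intros Hk. unfold mv, mDpB.
 rewrite (vsum_ext n _ (fun j => (if Nat.eqb k j then - d k * u j else 0) + B k j * u j)).
 rewrite vsum_plus, vsum_delta by auto. auto.
 intros j Hj. destruct (Nat.eqb k j); ring. Qed.

Lemma cs2 a b c e : a * c + b * e <= sqrt (a * a + b * b) * sqrt (c * c + e * e).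
Proof. rewrite <- sqrt_mult by nra.
 assert (Hs : (a * c + b * e) * (a * c + b * e) <= (a * a + b * b) * (c * c + e * e)).
 { assert (E : (a * a + b * b) * (c * c + e * e) - (a * c + b * e) * (a * c + b * e) = (a * e - b * c) * (a * e - b * c)) by ring.
   assert (0 <= (a * e - b * c) * (a * e - b * c)) by apply Rle_0_sqr. lra. }
 destruct (Rle_or_lt (a * c + b * e) 0). { pose proof (sqrt_pos ((a * a + b * b) * (c * c + e * e))); lra. }
 rewrite <- (sqrt_square (a * c + b * e)) at 1 by lra. apply sqrt_le_1; try lra. apply Rle_0_sqr. nra. Qed.

Lemma spectral_sub n d B :
  (forall i j, (i < n)%nat -> (j < n)%nat -> 0 <= B i j) ->
  (exists s, spectral_abscissa n (mDpB d B) s /\ 0 < s) ->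
  exists a r, 0 < r /\ (forall i, (i < n)%nat -> 0 <= a i) /\ (exists i, (i < n)%nat /\ 0 < a i) /\
    forall k, (k < n)%nat -> r * a k <= mv n B a k - d k * a k.
Proof.
 intros HB [s [[Hub Hlub] Hs]].
 assert (Hr : exists r, (exists b, is_eigenvalue n (mDpB d B) r b) /\ 0 < r).
 { apply NNPP; intros Hn. assert (s <= 0); [|lra]. apply Hlub. intros r Hr.
   apply Rnot_lt_le; intros Hr0. apply Hn. exists r; auto. }
 destruct Hr as [r [[b [u [v [[i0 [Hi0 Hnz]] [Hu Hv]]]]] Hr]].
 set (a := fun k => sqrt (u k * u k + v k * v k)).
 exists a, r. split; auto. split; [intros; apply sqrt_pos|]. split.
 { exists i0; split; auto. unfold a. apply sqrt_lt_R0. destruct Hnz as [H|H]; nra. }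
 intros k Hk.
 assert (Ha2 : a k * a k = u k * u k + v k * v k) by (unfold a; apply sqrt_sqrt; nra).
 assert (Hkey : r * (a k * a k) <= a k * mv n (mDpB d B) a k).
 { assert (E : r * (a k * a k) = u k * mv n (mDpB d B) u k + v k * mv n (mDpB d B) v k).
   { rewrite Hu, Hv, Ha2 by auto. ring. }
   rewrite E. unfold mv. rewrite <- !vsum_scal, <- vsum_plus. apply vsum_le. intros j Hj.
   unfold mDpB. destruct (Nat.eqb_spec k j) as [->|Hne].
   - replace (u j * ((- d j + B j j) * u j) + v j * ((- d j + B j j) * v j)) with ((- d j + B j j) * (u j * u j + v j * v j)) by ring.
     rewrite <- Ha2. lra.
   - replace (u k * ((0 + B k j) * u j) + v k * ((0 + B k j) * v j)) with (B k j * (u k * u j + v k * v j)) by ring.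
     replace (a k * ((0 + B k j) * a j)) with (B k j * (a k * a j)) by ring.
     apply Rmult_le_compat_l; auto. apply cs2. }
 rewrite mv_mDpB in Hkey by auto.
 assert (Hak := sqrt_pos (u k * u k + v k * v k)). fold (a k) in Hak.
 destruct Hak as [Hak|Hak].
 - apply Rmult_le_reg_l with (a k); auto. nra.
 - rewrite <- Hak. rewrite Rmult_0_r, Rmult_0_r, Rminus_0_r. unfold mv. apply vsum_nonneg.
   intros j Hj. apply Rmult_le_pos; auto. apply sqrt_pos.
Qed.

Definition cl (x : R) : R := Rmax 0 (Rmin x 1).

Lemma cl_I01 x : I01 (cl x).
Proof. unfold cl, I01. split. apply Rmax_l. apply Rmax_lub. lra. apply Rmin_r. Qed.

Lemma cl_id x : I01 x -> cl x = x.
Proof. unfold cl, I01; intros. rewrite Rmin_left by lra. rewrite Rmax_right; lra. Qed.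

Lemma cl_lip x y : Rabs (cl x - cl y) <= Rabs (x - y).
Proof. unfold cl, Rmax, Rmin. repeat destruct Rle_dec; apply Rabs_le; split;
 try (apply Rabs_def2; auto); unfold Rabs; destruct Rcase_abs; lra. Qed.

Lemma deriv_cont_gen S f t l : deriv_on S f t l ->
  forall eps, 0 < eps -> exists dl, 0 < dl /\ forall s, S s -> Rabs (s - t) < dl -> Rabs (f s - f t) < eps.
Proof. rewrite deriv_on_iff. intros H eps He. destruct (H 1 ltac:(lra)) as [a [Ha H1]].
 set (c := Rabs l + 1). assert (Hc : 0 < c) by (unfold c; pose proof (Rabs_pos l); lra).
 exists (Rmin a (eps / c)); split. apply Rmin_glb_lt; auto. apply Rdiv_lt_0_compat; lra.
 intros s Hs Hst. destruct (Req_dec s t) as [->|Hne]. rewrite Rminus_diag, Rabs_R0; lra.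
 assert (Hq := H1 s Hs Hne ltac:(eapply Rlt_le_trans; [apply Hst|apply Rmin_l])).
 assert (Hst2 : Rabs (s - t) < eps / c) by (eapply Rlt_le_trans; [apply Hst|apply Rmin_r]).
 set (q := (f s - f t) / (s - t)) in *.
 assert (Hqe : f s - f t = q * (s - t)) by (unfold q; field; lra).
 rewrite Hqe, Rabs_mult.
 assert (Rabs q <= c). { unfold c. assert (Rabs q <= Rabs (q - l) + Rabs l).
   { replace q with ((q - l) + l) at 1 by ring. apply Rabs_triang. } lra. }
 assert (Rabs q * Rabs (s - t) <= c * Rabs (s - t)) by (apply Rmult_le_compat_r; [apply Rabs_pos|auto]).
 assert (c * Rabs (s - t) < c * (eps / c)) by (apply Rmult_lt_compat_l; auto).
 replace (c * (eps / c)) with eps in * by (field; lra). lra.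
Qed.

Definition rc01 (f : R -> R) (c : R) : Prop :=
  forall eps, 0 < eps -> exists dl, 0 < dl /\ forall y, I01 y -> Rabs (y - c) < dl -> Rabs (f y - f c) < eps.

Lemma rc01_cl f x : rc01 f (cl x) -> continuity_pt (fun y => f (cl y)) x.
Proof. intros H. unfold continuity_pt, continue_in, limit1_in, limit_in. simpl. unfold Rdist.
 intros eps He. destruct (H eps He) as [dl [Hdl H1]]. exists dl; split; auto.
 intros y [_ Hy]. apply H1. apply cl_I01. eapply Rle_lt_trans; [apply cl_lip| auto]. Qed.

Lemma interior_deriv f x l : 0 < x < 1 -> deriv_on I01 f x l -> derivable_pt_lim (fun y => f (cl y)) x l.
Proof. rewrite deriv_on_iff. intros Hx H eps He. destruct (H eps He) as [a [Ha H1]].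
 assert (Hp : 0 < Rmin a (Rmin x (1 - x))) by (repeat apply Rmin_glb_lt; lra).
 exists (mkposreal _ Hp). simpl. intros hh Hh Hhl.
 assert (Hh1 : Rabs hh < a) by (eapply Rlt_le_trans; [apply Hhl| apply Rmin_l]).
 assert (Hh2 : Rabs hh < Rmin x (1 - x)) by (eapply Rlt_le_trans; [apply Hhl| apply Rmin_r]).
 assert (Hh3 : Rabs hh < x) by (eapply Rlt_le_trans; [apply Hh2| apply Rmin_l]).
 assert (Hh4 : Rabs hh < 1 - x) by (eapply Rlt_le_trans; [apply Hh2| apply Rmin_r]).
 apply Rabs_def2 in Hh3. apply Rabs_def2 in Hh4.
 rewrite !cl_id by (unfold I01; lra).
 specialize (H1 (x + hh) ltac:(unfold I01; lra) ltac:(lra) ltac:(replace (x + hh - x) with hh by ring; auto)).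
 replace (x + hh - x) with hh in H1 by ring. auto. Qed.

Lemma h_rc01 h c : good_h h -> I01 c -> rc01 h c.
Proof. intros [_ [_ [[Dk [HD0 HD]] _]]] Hc eps He.
 destruct (deriv_cont_gen _ _ _ _ (HD 0%nat c Hc) eps He) as [dl [Hdl H1]].
 exists dl; split; auto. intros y Hy Hyc. rewrite <- (HD0 y Hy), <- (HD0 c Hc). auto. Qed.

Lemma h_cont h x : good_h h -> continuity_pt (fun y => h (cl y)) x.
Proof. intros Hg. apply rc01_cl. apply h_rc01; auto. apply cl_I01. Qed.

Lemma h_lip h : good_h h -> exists L, 0 <= L /\ forall a b, I01 a -> I01 b -> Rabs (h b - h a) <= L * Rabs (b - a).
Proof. intros Hg. destruct Hg as [_ [_ [[Dk [HD0 HD]] _]]].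
 assert (Hc1 : forall y, continuity_pt (fun y => Rabs (Dk 1%nat (cl y))) y).
 { intros y. apply (rc01_cl (fun y => Rabs (Dk 1%nat y))). intros eps He.
   destruct (deriv_cont_gen _ _ _ _ (HD 1%nat (cl y) (cl_I01 y)) eps He) as [dl [Hdl H1]].
   exists dl; split; auto. intros z Hz Hzc. eapply Rle_lt_trans; [apply Rabs_triang_inv2| auto]. }
 destruct (continuity_ab_maj (fun y => Rabs (Dk 1%nat (cl y))) 0 1 ltac:(lra) (fun c _ => Hc1 c)) as [Mx [HM _]].
 set (L := Rabs (Dk 1%nat (cl Mx))). exists L. split; [apply Rabs_pos|].
 intros a b Ha Hb.
 destruct (MVT_gen (fun y => Dk 0%nat (cl y)) a b (Dk 1%nat)) as [c [Hc Hmvt]].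
 - intros y Hy. unfold I01 in Ha, Hb.
   assert (0 <= Rmin a b) by (apply Rmin_glb; lra). assert (Rmax a b <= 1) by (apply Rmax_lub; lra).
   assert (Hy01 : 0 < y < 1) by lra.
   apply is_derive_Reals. apply interior_deriv; auto. apply HD. unfold I01; lra.
 - intros y _. apply (rc01_cl (Dk 0%nat)). intros eps He.
   destruct (deriv_cont_gen _ _ _ _ (HD 0%nat (cl y) (cl_I01 y)) eps He) as [dl [Hdl H1]]. exists dl; auto.
 - rewrite !cl_id in Hmvt by auto. rewrite <- (HD0 a Ha), <- (HD0 b Hb). rewrite Hmvt. rewrite Rabs_mult.
   apply Rmult_le_compat_r; [apply Rabs_pos|].
   assert (Hc01 : I01 c). { unfold I01 in *. assert (0 <= Rmin a b) by (apply Rmin_glb; lra).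
     assert (Rmax a b <= 1) by (apply Rmax_lub; lra). lra. }
   rewrite <- (cl_id c Hc01). apply HM. apply Hc01.
Qed.

Definition phi (d : R) (hh : R -> R) (S z : R) : R := z * (d + hh (cl z) + S) - S.

Lemma phi_cont d hh S : (forall x, continuity_pt (fun y => hh (cl y)) x) -> continuity (phi d hh S).
Proof. intros Hc x. unfold phi.
 apply (continuity_pt_minus (fun z => z * (d + hh (cl z) + S)) (fun _ => S)).
 - apply (continuity_pt_mult (fun z => z) (fun z => d + hh (cl z) + S)).
   + apply derivable_continuous_pt. apply derivable_pt_id.
   + apply (continuity_pt_plus (fun z => d + hh (cl z)) (fun _ => S)).
     * apply (continuity_pt_plus (fun _ => d) (fun z => hh (cl z))); auto. apply continuity_pt_const; intros ? ?; auto.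
     * apply continuity_pt_const; intros ? ?; auto.
 - apply continuity_pt_const; intros ? ?; auto.
Qed.

Lemma root_ex d hh S : 0 < d -> good_h hh -> 0 <= S -> exists z, 0 <= z <= 1 /\ phi d hh S z = 0.
Proof. intros Hd Hg HS.
 assert (H0 : 0 <= hh (cl 1)) by (apply Hg; apply cl_I01).
 destruct (IVT_cor (phi d hh S) 0 1 (phi_cont d hh S (fun x => h_cont hh x Hg)) ltac:(lra)) as [z [Hz Hz']].
 { unfold phi. nra. }
 exists z; auto. Qed.

Definition gz (d : R) (hh : R -> R) (S : R) : R :=
  epsilon (inhabits 0) (fun z => 0 <= z <= 1 /\ phi d hh (Rmax S 0) z = 0).

Lemma gz_spec d hh S : 0 < d -> good_h hh -> 0 <= S -> 0 <= gz d hh S <= 1 /\ phi d hh S (gz d hh S) = 0.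
Proof. intros Hd Hg HS. unfold gz. rewrite Rmax_left by lra.
 apply epsilon_spec. apply root_ex; auto. Qed.

Lemma phi_mono d hh S S' y z : 0 < d -> good_h hh -> 0 <= S <= S' -> 0 <= y <= 1 -> 0 <= z <= 1 ->
  phi d hh S y <= 0 -> phi d hh S' z = 0 -> y <= z.
Proof. intros Hd [Hh0 [_ [_ [Hmono _]]]] HS Hy Hz Hpy Hpz. apply Rnot_lt_le. intros Hzy.
 unfold phi in *. rewrite cl_id in * by (unfold I01; lra).
 assert (hh z <= hh y) by (apply Hmono; unfold I01; lra).
 assert (0 <= hh z) by (apply Hh0; unfold I01; lra).
 assert (y * S' - S' <= y * S - S) by nra.
 assert (z * (d + hh z + S') < y * (d + hh z + S')) by (apply Rmult_lt_compat_r; lra).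
 assert (y * (d + hh z + S') <= y * (d + hh y + S')) by (apply Rmult_le_compat_l; lra).
 lra. Qed.

Lemma cv_vsum n (u : nat -> nat -> R) (c l : nat -> R) :
  (forall j, (j < n)%nat -> Un_cv (fun k => u k j) (l j)) ->
  Un_cv (fun k => vsum n (fun j => c j * u k j)) (vsum n (fun j => c j * l j)).
Proof. induction n; intros H; simpl.
 - intros eps He. exists 0%nat. intros; unfold Rdist; rewrite Rminus_diag, Rabs_R0; auto.
 - apply CV_plus. apply IHn; intros; apply H; lia.
   apply CV_mult. intros eps He; exists 0%nat; intros; unfold Rdist; rewrite Rminus_diag, Rabs_R0; auto.
   apply H; lia. Qed.

Lemma cv_le u l c : Un_cv u l -> (forall k, u k <= c) -> l <= c.
Proof. intros Hu H. apply Rnot_lt_le; intros Hl. destruct (Hu (l - c) ltac:(lra)) as [N HN].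
 specialize (HN N (le_n N)). specialize (H N). unfold Rdist in HN. apply Rabs_def2 in HN. lra. Qed.

Lemma cv_ge u l c : Un_cv u l -> (forall k, c <= u k) -> c <= l.
Proof. intros Hu H. apply Rnot_lt_le; intros Hl. destruct (Hu (c - l) ltac:(lra)) as [N HN].
 specialize (HN N (le_n N)). specialize (H N). unfold Rdist in HN. apply Rabs_def2 in HN. lra. Qed.

Lemma cv_shift u l : Un_cv u l -> Un_cv (fun k => u (S k)) l.
Proof. intros H eps He. destruct (H eps He) as [N HN]. exists N. intros k Hk. apply HN. lia. Qed.

Fixpoint Xit n (d : nat -> R) (B : nat -> nat -> R) (h : nat -> R -> R) (k : nat) : nat -> R :=
  match k with
  | O => fun _ => 1
  | S k => fun i => gz (d i) (h i) (mv n B (Xit n d B h k) i)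
  end.

Lemma cv_const c : Un_cv (fun _ => c) c.
Proof. intros eps He; exists 0%nat; intros; unfold Rdist; rewrite Rminus_diag, Rabs_R0; auto. Qed.

Lemma exist_nonzero_eq n d B h : sys_ok n d B h ->
  (exists s, spectral_abscissa n (mDpB d B) s /\ 0 < s) ->
  exists e, is_equilibrium n d B h e /\ ~ veq n e zerov.
Proof.
 intros [Hd [HB Hh]] Hs.
 destruct (spectral_sub n d B HB Hs) as [a [r [Hr [Ha0 [[i0 [Hi0 Hai0]] Hsub]]]]].
 assert (HmvA : forall i, (i < n)%nat -> 0 <= mv n B a i) by (intros; apply mv_nonneg; auto).
 destruct (fin_small n (fun i e => (i < n)%nat -> e * a i <= 1 /\ (0 < a i -> h i (e * a i) + e * mv n B a i <= r))) as [ep [Hep Hep']].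
 { intros j e e' He' H1 Hj. destruct (H1 Hj) as [H1a H1b].
   assert (Hea : 0 <= e' * a j <= e * a j) by (split; [apply Rmult_le_pos|apply Rmult_le_compat_r]; try apply Ha0; auto; lra).
   split. lra. intros Haj. specialize (H1b Haj).
   destruct (Hh j Hj) as [_ [_ [_ [Hmono _]]]].
   assert (h j (e' * a j) <= h j (e * a j)) by (apply Hmono; unfold I01; lra).
   assert (e' * mv n B a j <= e * mv n B a j) by (apply Rmult_le_compat_r; [apply HmvA; auto|]; lra). lra. }
 { intros j Hj. destruct (Ha0 j Hj) as [Haj|Haj].
   - destruct (h_rc01 (h j) 0 (Hh j Hj) ltac:(unfold I01; lra) (r / 2) ltac:(lra)) as [dl [Hdl H1]].
     set (M := mv n B a j). assert (HM : 0 <= M) by (apply HmvA; auto).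
     set (e := Rmin (Rmin (dl / (2 * a j)) (1 / a j)) (r / (2 * (M + 1)))).
     assert (He1 : e <= dl / (2 * a j)) by (unfold e; eapply Rle_trans; [apply Rmin_l| apply Rmin_l]).
     assert (He2 : e <= 1 / a j) by (unfold e; eapply Rle_trans; [apply Rmin_l| apply Rmin_r]).
     assert (He3 : e <= r / (2 * (M + 1))) by (unfold e; apply Rmin_r).
     assert (He0 : 0 < e) by (unfold e; repeat apply Rmin_glb_lt; apply Rdiv_lt_0_compat; lra).
     exists e. split; auto. intros _.
     assert (Hx1 : e * a j <= dl / 2) by (apply Rmult_le_reg_r with (/ a j); [apply Rinv_0_lt_compat; lra|];
       replace (e * a j * / a j) with e by (field; lra); replace (dl / 2 * / a j) with (dl / (2 * a j)) by (field; lra); lra).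
     assert (Hx2 : e * a j <= 1) by (apply Rmult_le_reg_r with (/ a j); [apply Rinv_0_lt_compat; lra|];
       replace (e * a j * / a j) with e by (field; lra); replace (1 * / a j) with (1 / a j) by (field; lra); lra).
     assert (Hx0 : 0 < e * a j) by (apply Rmult_lt_0_compat; lra).
     split; auto. intros _.
     specialize (H1 (e * a j) ltac:(unfold I01; lra) ltac:(rewrite Rminus_0_r, Rabs_right; lra)).
     destruct (Hh j Hj) as [_ [_ [_ [_ Hh00]]]]. rewrite Hh00, Rminus_0_r in H1. apply Rabs_def2 in H1.
     assert (e * M <= r / (2 * (M + 1)) * M) by (apply Rmult_le_compat_r; lra).
     assert (r / (2 * (M + 1)) * M <= r / 2).
     { replace (r / (2 * (M + 1)) * M) with (r / 2 * (M / (M + 1))) by (field; lra).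
       assert (M / (M + 1) <= 1) by (apply Rmult_le_reg_r with (M + 1); [lra|]; unfold Rdiv; rewrite Rmult_assoc, Rinv_l; lra).
       assert (0 <= M / (M + 1)) by (apply Rmult_le_pos; [lra| left; apply Rinv_0_lt_compat; lra]). nra. }
     lra.
   - exists 1. split; [lra|]. intros _. rewrite <- Haj. split; [lra| intros; lra]. }
 set (y := fun i => ep * a i).
 assert (Hy0 : forall i, (i < n)%nat -> 0 <= y i <= 1).
 { intros i Hi. split. apply Rmult_le_pos; [lra| apply Ha0; auto]. apply (Hep' i Hi Hi). }
 assert (Hysub : forall i, (i < n)%nat -> phi (d i) (h i) (mv n B y i) (y i) <= 0).
 { intros i Hi. unfold phi. rewrite cl_id by (apply Hy0; auto). unfold y. rewrite mv_scal.
   destruct (Ha0 i Hi) as [Hai|Hai].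
   - destruct (Hep' i Hi Hi) as [_ H2]. specialize (H2 Hai). specialize (Hsub i Hi).
     assert (0 < ep * a i) by (apply Rmult_lt_0_compat; auto).
     assert (ep * a i * (d i + h i (ep * a i) + ep * mv n B a i) <= ep * a i * (d i + r)) by (apply Rmult_le_compat_l; lra).
     assert (ep * (r * a i) <= ep * (mv n B a i - d i * a i)) by (apply Rmult_le_compat_l; lra). nra.
   - rewrite <- Hai. assert (0 <= ep * mv n B a i) by (apply Rmult_le_pos; [lra|apply HmvA; auto]). nra. }
 assert (F1 : forall k i, (i < n)%nat -> 0 <= (Xit n d B h) k i <= 1).
 { induction k; intros i Hi. simpl; lra. simpl. apply gz_spec; auto. apply mv_nonneg; auto. intros; apply IHk; auto. }
 assert (Fphi : forall k i, (i < n)%nat -> phi (d i) (h i) (mv n B ((Xit n d B h) k) i) ((Xit n d B h) (S k) i) = 0).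
 { intros k i Hi. simpl. apply gz_spec; auto. apply mv_nonneg; auto. intros; apply F1; auto. }
 assert (F2 : forall k i, (i < n)%nat -> (Xit n d B h) (S k) i <= (Xit n d B h) k i).
 { induction k; intros i Hi. simpl ((Xit n d B h) 0%nat i). apply F1; auto.
   apply (phi_mono (d i) (h i) (mv n B ((Xit n d B h) (S k)) i) (mv n B ((Xit n d B h) k) i)); auto.
   split. apply mv_nonneg; auto. intros; apply F1; auto. apply mv_le; auto.
   right; apply Fphi; auto. }
 assert (F3 : forall k i, (i < n)%nat -> y i <= (Xit n d B h) k i).
 { induction k; intros i Hi. simpl ((Xit n d B h) 0%nat i). apply Hy0; auto.
   apply (phi_mono (d i) (h i) (mv n B y i) (mv n B ((Xit n d B h) k) i)); auto.
   split. apply mv_nonneg; auto. intros; apply Hy0; auto. apply mv_le; auto. }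
 assert (Hlim : forall i, (i < n)%nat -> exists l, Un_cv (fun k => (Xit n d B h) k i) l).
 { intros i Hi. destruct (decreasing_cv (fun k => (Xit n d B h) k i)) as [l Hl].
   - intros k. apply F2; auto.
   - exists 0. intros z [k ->]. unfold opp_seq. specialize (F1 k i Hi). lra.
   - exists l; auto. }
 set (xb := fun i => epsilon (inhabits 0) (fun l => Un_cv (fun k => (Xit n d B h) k i) l)).
 assert (Hxb : forall i, (i < n)%nat -> Un_cv (fun k => (Xit n d B h) k i) (xb i)).
 { intros i Hi. unfold xb. apply epsilon_spec. auto. }
 assert (Hxb01 : forall i, (i < n)%nat -> 0 <= xb i <= 1).
 { intros i Hi. split. apply (cv_ge _ _ _ (Hxb i Hi)). intros; apply F1; auto.
   apply (cv_le _ _ _ (Hxb i Hi)). intros; apply F1; auto. }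
 exists xb. split. split.
 - intros i Hi; apply Hxb01; auto.
 - intros i Hi.
   assert (Hc : Un_cv (fun k => phi (d i) (h i) (mv n B ((Xit n d B h) k) i) ((Xit n d B h) (S k) i)) (phi (d i) (h i) (mv n B xb i) (xb i))).
   { unfold phi. apply CV_minus. apply CV_mult. apply (cv_shift (fun k => Xit n d B h k i)); auto.
     apply CV_plus. apply CV_plus. apply cv_const.
     apply (continuity_seq (fun z => h i (cl z))). apply h_cont; auto. apply (cv_shift (fun k => Xit n d B h k i)); auto.
     apply (cv_vsum n (fun k j => (Xit n d B h) k j) (B i) xb). auto.
     apply (cv_vsum n (fun k j => (Xit n d B h) k j) (B i) xb). auto. }
   assert (Hc0 : Un_cv (fun k => phi (d i) (h i) (mv n B ((Xit n d B h) k) i) ((Xit n d B h) (S k) i)) 0).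
   { eapply Un_cv_ext; [|apply cv_const]. intros k; simpl. rewrite Fphi; auto. }
   assert (E := UL_sequence _ _ _ Hc Hc0). unfold phi in E. rewrite cl_id in E by (apply Hxb01; auto).
   unfold sis_rhs. lra.
 - intros Hv. specialize (Hv i0 Hi0). unfold zerov in Hv.
   assert (y i0 <= xb i0) by (apply (cv_ge _ _ _ (Hxb i0 Hi0)); intros; apply F3; auto).
   assert (0 < y i0) by (unfold y; apply Rmult_lt_0_compat; auto). lra.
Qed.

Lemma eq_interior n d B h e : sys_ok n d B h -> irreducible n B -> is_equilibrium n d B h e -> ~ veq n e zerov ->
  in_int_Xi n e.
Proof. intros [Hd [HB Hh]] Hirr [He Heq] Hnz.
 assert (Hk : exists k, (k < n)%nat /\ e k <> 0).
 { apply NNPP; intros Hn; apply Hnz. intros k Hk. unfold zerov. apply NNPP; intros Hne. apply Hn; exists k; auto. }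
 destruct Hk as [k [Hk Hek]]. assert (Hek0 : 0 < e k) by (destruct (He k Hk) as [[H|H] _]; auto; congruence).
 assert (Hprop : forall i j, (i < n)%nat -> (j < n)%nat -> B i j <> 0 -> 0 < e j -> 0 < e i).
 { intros i j Hi Hj Hb Hej. destruct (He i Hi) as [[H|H] _]; auto. exfalso.
   specialize (Heq i Hi). unfold sis_rhs in Heq. rewrite <- H in Heq.
   assert (0 < B i j) by (destruct (HB i j Hi Hj); auto; congruence).
   assert (B i j * e j <= mv n B e i) by (apply mv_term; auto; intros; apply He; auto).
   assert (0 < B i j * e j) by (apply Rmult_lt_0_compat; auto). lra. }
 intros i Hi. split.
 - assert (H : forall j, reach n B i j -> 0 < e j -> 0 < e i).
   { induction 1 as [|k' j Hr IH Hj Hb]; auto. intros Hej. apply IH. apply (Hprop k' j); auto. eapply reach_lt; eauto. }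
   apply (H k); auto.
 - destruct (He i Hi) as [_ [H|H]]; auto. exfalso. specialize (Heq i Hi). unfold sis_rhs in Heq. rewrite H in Heq.
   assert (0 <= h i 1) by (apply (Hh i Hi); unfold I01; lra). specialize (Hd i Hi). lra.
Qed.

Lemma lip_cont (g : R -> R) C : (forall s s', Rabs (g s - g s') <= C * Rabs (s - s')) -> forall s, continuous g s.
Proof. intros H s. apply continuity_pt_filterlim.
 unfold continuity_pt, continue_in, limit1_in, limit_in. simpl. unfold Rdist.
 intros eps He. exists (eps / (Rabs C + 1)). split. apply Rdiv_lt_0_compat; [lra| pose proof (Rabs_pos C); lra].
 intros y [_ Hy]. eapply Rle_lt_trans. apply H.
 assert (C * Rabs (y - s) <= Rabs C * Rabs (y - s)) by (apply Rmult_le_compat_r; [apply Rabs_pos| apply Rle_abs]).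
 assert (Rabs C * Rabs (y - s) <= Rabs C * (eps / (Rabs C + 1))) by (apply Rmult_le_compat_l; [apply Rabs_pos|lra]).
 assert (Rabs C * (eps / (Rabs C + 1)) < eps).
 { pose proof (Rabs_pos C). apply Rmult_lt_reg_r with (Rabs C + 1); [lra|].
   replace (Rabs C * (eps / (Rabs C + 1)) * (Rabs C + 1)) with (Rabs C * eps) by (field; lra). nra. }
 lra. Qed.

Lemma exRInt (g : R -> R) : (forall s, continuous g s) -> forall a b, ex_RInt g a b.
Proof. intros H a b. apply (ex_RInt_continuous (V:=R_CompleteNormedModule)). intros; auto. Qed.

Definition RI (g : R -> R) (a b : R) : R := RInt g a b.

Lemma RI_chasles (g : R -> R) a b c : (forall s, continuous g s) -> RI g a b + RI g b c = RI g a c.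
Proof. intros Hc. unfold RI. exact (RInt_Chasles (V:=R_CompleteNormedModule) g a b c (exRInt g Hc a b) (exRInt g Hc b c)). Qed.

Lemma RI_swap (g : R -> R) a b : (forall s, continuous g s) -> RI g b a = - RI g a b.
Proof. intros Hc. unfold RI. rewrite <- (opp_RInt_swap (V:=R_CompleteNormedModule) g a b (exRInt g Hc a b)). reflexivity. Qed.

Lemma RI_abs_const (g : R -> R) a b M : a <= b -> (forall s, continuous g s) -> (forall t, a <= t <= b -> Rabs (g t) <= M) ->
  Rabs (RI g a b) <= (b - a) * M.
Proof. intros Hab Hc H. unfold RI. apply abs_RInt_le_const; auto. apply exRInt; auto. Qed.

Lemma RInt_lip (g : R -> R) K : (forall s, continuous g s) -> (forall s, Rabs (g s) <= K) ->
  forall t t', Rabs (RI g 0 t - RI g 0 t') <= K * Rabs (t - t').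
Proof. intros Hc Hb t t'.
 rewrite <- (RI_chasles g 0 t' t Hc). replace (RI g 0 t' + RI g t' t - RI g 0 t') with (RI g t' t) by ring.
 destruct (Rle_or_lt t' t) as [H|H].
 - rewrite (Rabs_right (t - t')) by lra. rewrite Rmult_comm. apply RI_abs_const; [lra| exact Hc| intros; apply Hb].
 - rewrite RI_swap by auto. rewrite Rabs_Ropp. rewrite (Rabs_left (t - t')) by lra. replace (- (t - t')) with (t' - t) by ring.
   rewrite Rmult_comm. apply RI_abs_const; [lra| exact Hc| intros; apply Hb].
Qed.

Lemma RInt_pow c m t : RI (fun s => c * s ^ m) 0 t = c * t ^ (S m) / INR (S m).
Proof. unfold RI. apply is_RInt_unique.
 replace (c * t ^ S m / INR (S m)) with (minus (c * t ^ S m / INR (S m)) (c * 0 ^ S m / INR (S m))).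
 2:{ replace (0 ^ S m) with 0 by (simpl; ring). unfold minus, plus, opp; cbn -[INR pow]. field. apply not_0_INR; lia. }
 apply (is_RInt_derive (fun s => c * s ^ S m / INR (S m))).
 - intros x _. auto_derive; auto. change (match m with 0%nat => 1 | S _ => INR m + 1 end) with (INR (S m)).
   field. apply not_0_INR; lia.
 - intros x _. apply continuity_pt_filterlim. apply derivable_continuous_pt. eexists. apply is_derive_Reals. auto_derive; auto.
Qed.

Definition lip (g : R -> R) C := forall s s', Rabs (g s - g s') <= C * Rabs (s - s').

Lemma abs_minus_le a b : Rabs (a - b) <= Rabs a + Rabs b.
Proof. unfold Rminus. eapply Rle_trans. apply Rabs_triang. rewrite Rabs_Ropp. lra. Qed.

Lemma lip_minus g1 g2 C1 C2 : lip g1 C1 -> lip g2 C2 -> lip (fun s => g1 s - g2 s) (C1 + C2).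
Proof. intros H1 H2 s s'. specialize (H1 s s'). specialize (H2 s s').
 replace (g1 s - g2 s - (g1 s' - g2 s')) with ((g1 s - g1 s') - (g2 s - g2 s')) by ring.
 eapply Rle_trans. apply abs_minus_le. lra. Qed.

Lemma lip_abs g C : lip g C -> lip (fun s => Rabs (g s)) C.
Proof. intros H s s'. eapply Rle_trans. apply Rabs_triang_inv2. apply H. Qed.

Lemma lip_c g C : lip g C -> forall s, continuous g s.
Proof. intros H. apply (lip_cont g C). exact H. Qed.

Lemma RI_minus (g1 g2 : R -> R) a b : (forall s, continuous g1 s) -> (forall s, continuous g2 s) ->
  RI (fun s => g1 s - g2 s) a b = RI g1 a b - RI g2 a b.
Proof. intros H1 H2. unfold RI.
 exact (RInt_minus (V:=R_CompleteNormedModule) g1 g2 a b (exRInt g1 H1 a b) (exRInt g2 H2 a b)). Qed.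

Lemma RI_abs_mono (g b : R -> R) t : 0 <= t -> (forall s, continuous g s) -> (forall s, continuous (fun s => Rabs (g s)) s) ->
  (forall s, continuous b s) -> (forall s, 0 < s < t -> Rabs (g s) <= b s) -> Rabs (RI g 0 t) <= RI b 0 t.
Proof. intros Ht H1 H2 H3 H. unfold RI. eapply Rle_trans. apply abs_RInt_le; auto. apply exRInt; auto.
 apply RInt_le; auto; apply (exRInt (fun s => _)); auto. Qed.

Lemma RI_point (g : R -> R) a : RI g a a = 0.
Proof. unfold RI. exact (RInt_point (V:=R_CompleteNormedModule) a g). Qed.

Definition Fok n (F : (nat -> R) -> nat -> R) K L :=
  0 <= K /\ 0 < L /\ (forall y i, (i < n)%nat -> Rabs (F y i) <= K) /\
  (forall y z i, (i < n)%nat -> Rabs (F y i - F z i) <= L * vnorm n (vsub y z)).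

Fixpoint Pic (F : (nat -> R) -> nat -> R) (x0 : nat -> R) (k : nat) : R -> nat -> R :=
  match k with
  | O => fun _ => x0
  | S k => fun t i => x0 i + RI (fun s => F (Pic F x0 k s) i) 0 t
  end.

Lemma vnorm_lip n (y : R -> nat -> R) K s s' : (forall j, (j < n)%nat -> Rabs (y s j - y s' j) <= K * Rabs (s - s')) ->
  vnorm n (vsub (y s) (y s')) <= INR n * (K * Rabs (s - s')).
Proof. intros H. unfold vnorm, vsub. rewrite <- vsum_const. apply vsum_le; auto. Qed.

Lemma Fcomp_lip n F K L (y : R -> nat -> R) C i : Fok n F K L -> (i < n)%nat ->
  (forall j s s', (j < n)%nat -> Rabs (y s j - y s' j) <= C * Rabs (s - s')) ->
  lip (fun s => F (y s) i) (L * (INR n * C)).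
Proof. intros [_ [HL [_ HFl]]] Hi H s s'. eapply Rle_trans. apply HFl; auto.
 replace (L * (INR n * C) * Rabs (s - s')) with (L * (INR n * (C * Rabs (s - s')))) by ring.
 apply Rmult_le_compat_l; [lra|]. apply vnorm_lip. intros; apply H; auto. Qed.

Lemma pic_lip n F K L x0 : Fok n F K L ->
  forall k i s s', (i < n)%nat -> Rabs (Pic F x0 k s i - Pic F x0 k s' i) <= K * Rabs (s - s').
Proof. intros HF. pose proof HF as [HK [HL [HFb HFl]]]. induction k; intros i s s' Hi; simpl.
 - rewrite Rminus_diag, Rabs_R0. apply Rmult_le_pos; auto; apply Rabs_pos.
 - replace (x0 i + RI (fun s0 => F (Pic F x0 k s0) i) 0 s - (x0 i + RI (fun s0 => F (Pic F x0 k s0) i) 0 s'))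
     with (RI (fun s0 => F (Pic F x0 k s0) i) 0 s - RI (fun s0 => F (Pic F x0 k s0) i) 0 s') by ring.
   apply RInt_lip. apply (lip_c _ _ (Fcomp_lip n F K L _ K i HF Hi (fun j s s' Hj => IHk j s s' Hj))).

   intros; apply HFb; auto.
Qed.

Lemma pic_gcont n F K L x0 k i : Fok n F K L -> (i < n)%nat -> lip (fun s => F (Pic F x0 k s) i) (L * (INR n * K)).
Proof. intros HF Hi. apply Fcomp_lip with K; auto. intros j s s' Hj; apply (pic_lip n F K L x0 HF k j s s' Hj). Qed.

Lemma pic_diff n F K L x0 : Fok n F K L -> forall k t, 0 <= t ->
  vnorm n (vsub (Pic F x0 (S k) t) (Pic F x0 k t)) <= INR n * K * (INR n * L) ^ k * t ^ (S k) / INR (fact (S k)).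
Proof. intros HF. pose proof HF as [HK [HL [HFb HFl]]]. induction k; intros t Ht.
 - unfold vnorm, vsub. replace (INR n * K * (INR n * L) ^ 0 * t ^ 1 / INR (fact 1)) with (INR n * (t * K)) by (simpl; field).
   rewrite <- vsum_const. apply vsum_le. intros i Hi. simpl Pic.
   replace (x0 i + RI (fun s => F x0 i) 0 t - x0 i) with (RI (fun s => F x0 i) 0 t) by ring.
   replace (t * K) with ((t - 0) * K) by ring. apply RI_abs_const; auto.
   apply (lip_c _ _ (pic_gcont n F K L x0 0 i HF Hi)).
 - set (c := L * (INR n * K * (INR n * L) ^ k / INR (fact (S k)))).
   assert (Hf : INR (fact (S (S k))) = INR (S (S k)) * INR (fact (S k))) by (rewrite fact_simpl, mult_INR; auto).
   assert (Hfk := INR_fact_neq_0 (S k)). assert (HSk : INR (S (S k)) <> 0) by (apply not_0_INR; lia).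
   replace (INR n * K * (INR n * L) ^ S k * t ^ S (S k) / INR (fact (S (S k)))) with (INR n * (c * t ^ S (S k) / INR (S (S k))))
     by (unfold c; rewrite Hf; simpl pow; field; auto).
   unfold vnorm, vsub. rewrite <- vsum_const. apply vsum_le. intros i Hi.
   rewrite <- RInt_pow.
   assert (E : Pic F x0 (S (S k)) t i - Pic F x0 (S k) t i =
     RI (fun s => F (Pic F x0 (S k) s) i - F (Pic F x0 k s) i) 0 t).
   { rewrite RI_minus. simpl. ring. apply (lip_c _ _ (pic_gcont n F K L x0 (S k) i HF Hi)).
     apply (lip_c _ _ (pic_gcont n F K L x0 k i HF Hi)). }
   rewrite E. apply RI_abs_mono; auto.
   + apply (lip_c _ _ (lip_minus _ _ _ _ (pic_gcont n F K L x0 (S k) i HF Hi) (pic_gcont n F K L x0 k i HF Hi))).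
   + apply (lip_c _ _ (lip_abs _ _ (lip_minus _ _ _ _ (pic_gcont n F K L x0 (S k) i HF Hi) (pic_gcont n F K L x0 k i HF Hi)))).
   + intros s. apply continuity_pt_filterlim. apply derivable_continuous_pt. eexists. apply is_derive_Reals. auto_derive; auto.
   + intros s Hs. eapply Rle_trans. apply HFl; auto.
     replace (c * s ^ S k) with (L * (INR n * K * (INR n * L) ^ k * s ^ S k / INR (fact (S k)))) by (unfold c; field; auto).
     apply Rmult_le_compat_l; [lra|]. apply IHk. lra.
Qed.

Lemma E1_S x m : E1 x (S m) = E1 x m + / INR (fact (S m)) * x ^ (S m).
Proof. unfold E1. apply tech5. Qed.

Lemma E1_growing x : 0 <= x -> Un_growing (E1 x).
Proof. intros Hx m. rewrite E1_S. assert (0 <= / INR (fact (S m)) * x ^ S m).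
 { apply Rmult_le_pos. left; apply Rinv_0_lt_compat, INR_fact_lt_0. apply pow_le; auto. } lra. Qed.

Lemma pic_bound n F K L x0 : Fok n F K L -> forall t, 0 <= t -> forall s, 0 <= s <= t -> forall i k m, (i < n)%nat -> (k <= m)%nat ->
  Rabs (Pic F x0 m s i - Pic F x0 k s i) <= (INR n * K / (INR n * L)) * (E1 (INR n * L * t) m - E1 (INR n * L * t) k).
Proof. intros HF t Ht s Hs i k m Hi Hkm. pose proof HF as [HK [HL [HFb HFl]]].
 assert (Hn : 0 < INR n) by (apply lt_0_INR; lia).
 assert (HQ : 0 < INR n * L) by (apply Rmult_lt_0_compat; auto).
 assert (HAQ : 0 <= INR n * K / (INR n * L)) by (apply Rmult_le_pos; [apply Rmult_le_pos; lra| left; apply Rinv_0_lt_compat; auto]).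
 induction m.
 - replace k with 0%nat by lia. rewrite !Rminus_diag, Rabs_R0. lra.
 - destruct (Nat.eq_dec k (S m)) as [->|Hne]. { rewrite !Rminus_diag, Rabs_R0. lra. }
   specialize (IHm ltac:(lia)).
   replace (Pic F x0 (S m) s i - Pic F x0 k s i) with ((Pic F x0 (S m) s i - Pic F x0 m s i) + (Pic F x0 m s i - Pic F x0 k s i)) by ring.
   eapply Rle_trans. apply Rabs_triang.
   assert (H1 : Rabs (Pic F x0 (S m) s i - Pic F x0 m s i) <= INR n * K * (INR n * L) ^ m * s ^ (S m) / INR (fact (S m))).
   { eapply Rle_trans; [apply (vnorm_term n (vsub (Pic F x0 (S m) s) (Pic F x0 m s)) i Hi)|]. apply (pic_diff n F K L x0 HF m s); lra. }
   assert (H2 : INR n * K * (INR n * L) ^ m * s ^ (S m) / INR (fact (S m)) <= INR n * K * (INR n * L) ^ m * t ^ (S m) / INR (fact (S m))).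
   { unfold Rdiv. apply Rmult_le_compat_r. left; apply Rinv_0_lt_compat, INR_fact_lt_0.
     apply Rmult_le_compat_l. apply Rmult_le_pos; [apply Rmult_le_pos; lra| apply pow_le; lra]. apply pow_incr; lra. }
   assert (E : INR n * K * (INR n * L) ^ m * t ^ (S m) / INR (fact (S m)) =
     (INR n * K / (INR n * L)) * (E1 (INR n * L * t) (S m) - E1 (INR n * L * t) m)).
   { rewrite E1_S. rewrite (Rpow_mult_distr (INR n * L) t (S m)). simpl pow. field. split; [apply INR_fact_neq_0| lra]. }
   lra.
Qed.

Lemma pic_cv n F K L x0 : Fok n F K L -> forall t i, 0 <= t -> (i < n)%nat -> exists l, Un_cv (fun k => Pic F x0 k t i) l.
Proof. intros HF t i Ht Hi. pose proof HF as [HK [HL [HFb HFl]]].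
 assert (Hn : 0 < INR n) by (apply lt_0_INR; lia).
 assert (HQ : 0 < INR n * L) by (apply Rmult_lt_0_compat; auto).
 set (AQ := INR n * K / (INR n * L)).
 assert (HAQ : 0 <= AQ) by (apply Rmult_le_pos; [apply Rmult_le_pos; lra| left; apply Rinv_0_lt_compat; auto]).
 set (x := INR n * L * t).
 assert (Hx : 0 <= x) by (apply Rmult_le_pos; lra).
 assert (HC := CV_Cauchy (E1 x) (exist _ (exp x) (E1_cvg x))).
 enough (Hcc : Cauchy_crit (fun k => Pic F x0 k t i)) by (destruct (Rcomplete.R_complete _ Hcc) as [l Hl]; exists l; auto).
 intros eps He. destruct (HC (eps / (AQ + 1)) ltac:(apply Rdiv_lt_0_compat; lra)) as [N HN].
 exists N. intros a b Ha Hb. specialize (HN a b Ha Hb). unfold Rdist in *.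
 assert (Hb' : Rabs (Pic F x0 a t i - Pic F x0 b t i) <= AQ * Rabs (E1 x a - E1 x b)).
 { destruct (le_ge_dec b a) as [Hab|Hab].
   - eapply Rle_trans. apply (pic_bound n F K L x0 HF t Ht t ltac:(lra) i b a Hi Hab). apply Rmult_le_compat_l; auto. apply Rle_abs.
   - rewrite Rabs_minus_sym, (Rabs_minus_sym (E1 x a)). eapply Rle_trans. apply (pic_bound n F K L x0 HF t Ht t ltac:(lra) i a b Hi Hab).
     apply Rmult_le_compat_l; auto. apply Rle_abs. }
 assert (AQ * Rabs (E1 x a - E1 x b) <= AQ * (eps / (AQ + 1))) by (apply Rmult_le_compat_l; lra).
 assert (AQ * (eps / (AQ + 1)) < eps).
 { apply Rmult_lt_reg_r with (AQ + 1); [lra|]. replace (AQ * (eps / (AQ + 1)) * (AQ + 1)) with (AQ * eps) by (field; lra). nra. }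
 lra.
Qed.

Definition xl (F : (nat -> R) -> nat -> R) (x0 : nat -> R) (t : R) (i : nat) : R :=
  epsilon (inhabits 0) (fun l => Un_cv (fun k => Pic F x0 k (Rmax t 0) i) l).

Lemma xl_cv n F K L x0 t i : Fok n F K L -> (i < n)%nat -> Un_cv (fun k => Pic F x0 k (Rmax t 0) i) (xl F x0 t i).
Proof. intros HF Hi. unfold xl. apply epsilon_spec. apply (pic_cv n F K L); auto. apply Rmax_r. Qed.

Lemma cv_abs_minus u v a b : Un_cv u a -> Un_cv v b -> Un_cv (fun k => Rabs (u k - v k)) (Rabs (a - b)).
Proof. intros Hu Hv. apply (continuity_seq Rabs (fun k => u k - v k)). apply Rcontinuity_abs. apply CV_minus; auto. Qed.

Lemma cv_c c : Un_cv (fun _ => c) c.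
Proof. intros eps He; exists 0%nat; intros; unfold Rdist; rewrite Rminus_diag, Rabs_R0; auto. Qed.

Lemma cv_le_ev u l c N : Un_cv u l -> (forall k, (N <= k)%nat -> u k <= c) -> l <= c.
Proof. intros Hu H. apply Rnot_lt_le; intros Hl. destruct (Hu (l - c) ltac:(lra)) as [M HM].
 specialize (HM (max N M) ltac:(lia)). specialize (H (max N M) ltac:(lia)). unfold Rdist in HM. apply Rabs_def2 in HM. lra. Qed.

Lemma Rmax0_lip a b : Rabs (Rmax a 0 - Rmax b 0) <= Rabs (a - b).
Proof. unfold Rmax. repeat destruct Rle_dec; apply Rabs_le; split; try (apply Rabs_def2; auto);
 unfold Rabs; destruct Rcase_abs; lra. Qed.

Lemma xl_lip n F K L x0 i a b : Fok n F K L -> (i < n)%nat -> Rabs (xl F x0 a i - xl F x0 b i) <= K * Rabs (a - b).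
Proof. intros HF Hi. pose proof HF as [HK _].
 apply (cv_le_ev _ _ _ 0 (cv_abs_minus _ _ _ _ (xl_cv n F K L x0 a i HF Hi) (xl_cv n F K L x0 b i HF Hi))).
 intros k _. eapply Rle_trans. apply (pic_lip n F K L x0 HF k i _ _ Hi). apply Rmult_le_compat_l; auto. apply Rmax0_lip. Qed.

Lemma xl_err n F K L x0 : Fok n F K L -> forall t, 0 <= t -> forall s, 0 <= s <= t -> forall i k, (i < n)%nat ->
  Rabs (xl F x0 s i - Pic F x0 k s i) <= (INR n * K / (INR n * L)) * (exp (INR n * L * t) - E1 (INR n * L * t) k).
Proof. intros HF t Ht s Hs i k Hi. pose proof HF as [HK [HL _]].
 assert (Hn : 0 < INR n) by (apply lt_0_INR; lia).
 assert (HAQ : 0 <= INR n * K / (INR n * L)) by (apply Rmult_le_pos; [apply Rmult_le_pos; lra| left; apply Rinv_0_lt_compat; apply Rmult_lt_0_compat; auto]).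
 assert (Hcv := xl_cv n F K L x0 s i HF Hi). rewrite Rmax_left in Hcv by lra.
 apply (cv_le_ev _ _ _ k (cv_abs_minus _ _ _ _ Hcv (cv_c (Pic F x0 k s i)))).
 intros m Hm. eapply Rle_trans. apply (pic_bound n F K L x0 HF t Ht s Hs i k m Hi Hm).
 apply Rmult_le_compat_l; auto.
 assert (E1 (INR n * L * t) m <= exp (INR n * L * t)).
 { apply growing_ineq. apply E1_growing. apply Rmult_le_pos; [apply Rmult_le_pos|]; lra. apply E1_cvg. }
 lra.
Qed.

Lemma cv_squeeze u v w c : (forall k, Rabs (u k - v) <= c * w k) -> Un_cv w 0 -> 0 <= c -> Un_cv u v.
Proof. intros H Hw Hc eps He. destruct (Hw (eps / (c + 1)) ltac:(apply Rdiv_lt_0_compat; lra)) as [N HN].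
 exists N. intros k Hk. specialize (HN k Hk). specialize (H k). unfold Rdist in *. rewrite Rminus_0_r in HN.
 assert (c * w k <= c * Rabs (w k)) by (apply Rmult_le_compat_l; auto; apply Rle_abs).
 assert (c * Rabs (w k) <= c * (eps / (c + 1))) by (apply Rmult_le_compat_l; lra).
 assert (c * (eps / (c + 1)) < eps).
 { apply Rmult_lt_reg_r with (c + 1); [lra|]. replace (c * (eps / (c + 1)) * (c + 1)) with (c * eps) by (field; lra). nra. }
 lra. Qed.

Lemma xl_eq n F K L x0 : Fok n F K L -> forall t i, 0 <= t -> (i < n)%nat ->
  xl F x0 t i = x0 i + RI (fun s => F (xl F x0 s) i) 0 t.
Proof. intros HF t i Ht Hi. pose proof HF as [HK [HL [HFb HFl]]].
 assert (Hn : 0 < INR n) by (apply lt_0_INR; lia).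
 set (AQ := INR n * K / (INR n * L)).
 assert (HAQ : 0 <= AQ) by (apply Rmult_le_pos; [apply Rmult_le_pos; lra| left; apply Rinv_0_lt_compat; apply Rmult_lt_0_compat; auto]).
 assert (HG : lip (fun s => F (xl F x0 s) i) (L * (INR n * K))).
 { apply Fcomp_lip with K; auto. intros j s s' Hj. apply (xl_lip n F K L x0 j s s' HF Hj). }
 assert (H1 : Un_cv (fun k => Pic F x0 (S k) t i) (xl F x0 t i)).
 { assert (Hc := xl_cv n F K L x0 t i HF Hi). rewrite Rmax_left in Hc by lra.
   intros eps He. destruct (Hc eps He) as [N HN]. exists N. intros k Hk. apply HN. lia. }
 assert (H2 : Un_cv (fun k => Pic F x0 (S k) t i) (x0 i + RI (fun s => F (xl F x0 s) i) 0 t)).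
 { apply (cv_squeeze _ _ (fun k => exp (INR n * L * t) - E1 (INR n * L * t) k) (t * (L * (INR n * AQ)))).
   - intros k. simpl Pic.
     replace (x0 i + RI (fun s => F (Pic F x0 k s) i) 0 t - (x0 i + RI (fun s => F (xl F x0 s) i) 0 t))
       with (RI (fun s => F (Pic F x0 k s) i - F (xl F x0 s) i) 0 t)
       by (rewrite RI_minus; [ring| apply (lip_c _ _ (pic_gcont n F K L x0 k i HF Hi))| apply (lip_c _ _ HG)]).
     replace (t * (L * (INR n * AQ)) * (exp (INR n * L * t) - E1 (INR n * L * t) k))
       with ((t - 0) * (L * (INR n * (AQ * (exp (INR n * L * t) - E1 (INR n * L * t) k))))) by ring.
     apply RI_abs_const; auto.
     + apply (lip_c _ _ (lip_minus _ _ _ _ (pic_gcont n F K L x0 k i HF Hi) HG)).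
     + intros s Hs. eapply Rle_trans. apply HFl; auto. apply Rmult_le_compat_l; [lra|].
       unfold vnorm, vsub. rewrite <- vsum_const. apply vsum_le. intros j Hj.
       rewrite Rabs_minus_sym. apply (xl_err n F K L x0 HF t Ht s Hs j k Hj).
   - replace 0 with (exp (INR n * L * t) - exp (INR n * L * t)) by ring. apply CV_minus. apply cv_c. apply E1_cvg.
   - apply Rmult_le_pos; auto. apply Rmult_le_pos; [lra| apply Rmult_le_pos; lra]. }
 exact (UL_sequence _ _ _ H1 H2).
Qed.

Lemma xl_deriv n F K L x0 : Fok n F K L -> forall t i, 0 <= t -> (i < n)%nat ->
  deriv_on (fun s => 0 <= s) (fun s => xl F x0 s i) t (F (xl F x0 t) i).
Proof. intros HF t i Ht Hi. pose proof HF as [HK [HL [HFb HFl]]].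
 assert (HG : lip (fun s => F (xl F x0 s) i) (L * (INR n * K))).
 { apply Fcomp_lip with K; auto. intros j s s' Hj. apply (xl_lip n F K L x0 j s s' HF Hj). }
 set (G := fun s => F (xl F x0 s) i) in *.
 assert (HD : derivable_pt_lim (fun s => x0 i + RI G 0 s) t (G t)).
 { replace (G t) with (0 + G t) by ring. apply derivable_pt_lim_plus. apply derivable_pt_lim_const.
   apply is_derive_Reals. unfold RI.
   apply (is_derive_RInt (V:=R_CompleteNormedModule) G (fun s => RInt G 0 s) 0 t).
   - apply filter_forall. intros b. apply RInt_correct. apply exRInt. apply (lip_c _ _ HG).
   - apply (lip_c _ _ HG). }
 apply (deriv_on_ext _ (fun s => x0 i + RI G 0 s)).
 - intros y Hy. symmetry. apply (xl_eq n F K L x0 HF y i Hy Hi).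
 - symmetry. apply (xl_eq n F K L x0 HF t i Ht Hi).
 - apply deriv_of_pt_lim. exact HD.
Qed.

Lemma ode_exist n F K L x0 : Fok n F K L ->
  exists x : R -> nat -> R, (forall i, (i < n)%nat -> x 0 i = x0 i) /\
    (forall t i, 0 <= t -> (i < n)%nat -> deriv_on (fun s => 0 <= s) (fun s => x s i) t (F (x t) i)).
Proof. intros HF. exists (xl F x0). split.
 - intros i Hi. rewrite (xl_eq n F K L x0 HF 0 i ltac:(lra) Hi). rewrite RI_point. ring.
 - intros t i Ht Hi. apply (xl_deriv n F K L x0 HF t i Ht Hi).
Qed.

Definition Fc n d (B : nat -> nat -> R) (h : nat -> R -> R) (y : nat -> R) (i : nat) : R :=
  - (d i + h i (cl (y i))) * cl (y i) + (1 - cl (y i)) * mv n B (fun j => cl (y j)) i.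

Lemma cl_neg x : x < 0 -> cl x = 0.
Proof. intros; unfold cl. rewrite Rmin_left by lra. rewrite Rmax_left; lra. Qed.
Lemma cl_big x : 1 < x -> cl x = 1.
Proof. intros; unfold cl. rewrite Rmin_right by lra. rewrite Rmax_right; lra. Qed.

Lemma Rabs5 a b c e f : Rabs (- a - b - c + e + f) <= Rabs a + Rabs b + Rabs c + Rabs e + Rabs f.
Proof. unfold Rabs; repeat destruct Rcase_abs; lra. Qed.

Lemma mv_minus n B u v i : mv n B u i - mv n B v i = vsum n (fun j => B i j * (u j - v j)).
Proof. unfold mv. rewrite <- vsum_minus. apply vsum_ext; intros; ring. Qed.

Lemma Fc_ok n d B h : sys_ok n d B h -> exists K L, Fok n (Fc n d B h) K L.
Proof. intros [Hd [HB Hh]].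
 set (Bs := fun i => mv n B (fun _ => 1) i).
 assert (HBs : forall i, (i < n)%nat -> 0 <= Bs i) by (intros; apply mv_nonneg; auto; intros; lra).
 assert (HS : forall y i, (i < n)%nat -> 0 <= mv n B (fun j => cl (y j)) i <= Bs i).
 { intros y i Hi. split. apply mv_nonneg; auto; intros; apply cl_I01. apply mv_le; auto. intros; apply cl_I01. }
 assert (Hhb : forall i, (i < n)%nat -> exists M, 0 <= M /\ forall x, I01 x -> 0 <= h i x <= M).
 { intros i Hi. destruct (Hh i Hi) as [H0 [[M HM] _]]. exists M. split.
   eapply Rle_trans; [apply (H0 0); unfold I01; lra| apply HM; unfold I01; lra]. intros; split; auto. }
 destruct (fin_big n (fun i c => forall y, Rabs (Fc n d B h y i) <= c)) as [K [HK HKi]].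
 { intros j e e' He H y. specialize (H y). lra. }
 { intros i Hi. destruct (Hhb i Hi) as [M [HM0 HM]]. exists (d i + M + Bs i). intros y. unfold Fc.
   assert (Hc := cl_I01 (y i)). assert (Hhc := HM _ Hc). specialize (HS y i Hi). specialize (Hd i Hi). unfold I01 in Hc.
   assert (0 <= (d i + h i (cl (y i))) * cl (y i) <= d i + M) by (split; [apply Rmult_le_pos|]; nra).
   assert (0 <= (1 - cl (y i)) * mv n B (fun j => cl (y j)) i <= Bs i) by (split; [apply Rmult_le_pos|]; nra).
   apply Rabs_le; lra. }
 destruct (fin_big n (fun i c => forall y z, Rabs (Fc n d B h y i - Fc n d B h z i) <= c * vnorm n (vsub y z))) as [L [HL HLi]].
 { intros j e e' He H y z. specialize (H y z). assert (0 <= vnorm n (vsub y z)) by apply vnorm_nonneg. nra. }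
 { intros i Hi. destruct (Hhb i Hi) as [M [HM0 HM]]. destruct (h_lip (h i) (Hh i Hi)) as [Lh [HLh0 HLh]].
   exists (d i + M + Lh + 2 * Bs i). intros y z. unfold Fc.
   set (u := cl (y i)). set (w := cl (z i)). set (V := vnorm n (vsub y z)).
   set (S := mv n B (fun j => cl (y j)) i). set (S' := mv n B (fun j => cl (z j)) i).
   assert (Hu := cl_I01 (y i)). assert (Hw := cl_I01 (z i)). fold u in Hu. fold w in Hw. unfold I01 in Hu, Hw.
   assert (HV0 : 0 <= V) by apply vnorm_nonneg.
   assert (Huw : Rabs (u - w) <= V).
   { eapply Rle_trans. apply cl_lip. apply (vnorm_term n (vsub y z) i Hi). }
   assert (HSS : Rabs (S - S') <= Bs i * V).
   { unfold S, S'. rewrite mv_minus. eapply Rle_trans. apply vsum_abs.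
     unfold Bs, mv. rewrite Rmult_comm, <- vsum_scal. apply vsum_le. intros j Hj. rewrite Rabs_mult.
     rewrite (Rabs_right (B i j)) by (apply Rle_ge, HB; auto). rewrite Rmult_1_r, (Rmult_comm V).
     apply Rmult_le_compat_l; auto. eapply Rle_trans. apply cl_lip. apply (vnorm_term n (vsub y z) j Hj). }
   assert (HS' := HS z i Hi). fold S' in HS'.
   assert (Hhu := HM u Hu). assert (Hhw := HM w Hw). assert (Hlh := HLh w u Hw Hu).
   replace (- (d i + h i u) * u + (1 - u) * S - (- (d i + h i w) * w + (1 - w) * S'))
     with (- (d i * (u - w)) - (h i u * (u - w)) - ((h i u - h i w) * w) + ((1 - u) * (S - S')) + ((w - u) * S')) by ring.
   eapply Rle_trans. apply Rabs5. rewrite !Rabs_mult.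
   assert (Rabs (d i) * Rabs (u - w) <= d i * V) by (rewrite Rabs_right by (specialize (Hd i Hi); lra); apply Rmult_le_compat_l; [specialize (Hd i Hi); lra| auto]).
   assert (Rabs (h i u) * Rabs (u - w) <= M * V) by (apply Rmult_le_compat; try apply Rabs_pos; auto; rewrite Rabs_right; lra).
   assert (Rabs (h i u - h i w) * Rabs w <= Lh * V).
   { rewrite (Rabs_right w) by lra. replace (Lh * V) with (Lh * V * 1) by ring. apply Rmult_le_compat; try apply Rabs_pos; try lra.
     eapply Rle_trans. apply Hlh. apply Rmult_le_compat_l; auto. }
   assert (Rabs (1 - u) * Rabs (S - S') <= Bs i * V) by (rewrite <- (Rmult_1_l (Bs i * V)); apply Rmult_le_compat; try apply Rabs_pos; auto; rewrite Rabs_right; lra).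
   assert (Rabs (w - u) * Rabs S' <= V * Bs i) by (apply Rmult_le_compat; try apply Rabs_pos; [rewrite Rabs_minus_sym; auto| rewrite Rabs_right; lra]).
   lra. }
 exists K, L. repeat split; try lra; intros; [apply HKi; auto| apply HLi; auto].
Qed.

Lemma lin_der e T : derivable_pt_lim (fun s => e * (1 + s)) T e.
Proof. apply is_derive_Reals. auto_derive; auto. ring. Qed.

Lemma lin_der1 e T : derivable_pt_lim (fun s => 1 + e * (1 + s)) T e.
Proof. apply is_derive_Reals. auto_derive; auto. ring. Qed.

Lemma exists_solution n d B h : sys_ok n d B h ->
  forall x0, in_Xi n x0 -> exists x, is_solution n d B h x /\ forall i, (i < n)%nat -> x 0 i = x0 i.
Proof. intros Hok x0 Hx0. pose proof Hok as [Hd [HB Hh]].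
 destruct (Fc_ok n d B h Hok) as [K [L HF]].
 destruct (ode_exist n (Fc n d B h) K L x0 HF) as [x [H0 Hder]].
 assert (Hlow : forall i t, (i < n)%nat -> 0 <= t -> 0 <= x t i).
 { intros i t Hi Ht. apply Rnot_lt_le. intros Hneg.
   set (e := - x t i / (2 * (1 + t))).
   assert (He : 0 < e) by (unfold e; apply Rdiv_lt_0_compat; lra).
   set (z := fun (_ : nat) s => x s i + e * (1 + s)).
   assert (Hz : forall s, 0 <= s -> deriv_on (fun s => 0 <= s) (z 0%nat) s (Fc n d B h (x s) i + e)).
   { intros s Hs. pose proof (deriv_on_lin _ _ _ s _ _ 1 1 (Hder s i Hs Hi) (deriv_of_pt_lim (fun s => 0 <= s) _ _ _ (lin_der e s))) as HH.
     eapply deriv_on_ext; [| | replace (Fc n d B h (x s) i + e) with (1 * Fc n d B h (x s) i + 1 * e) by ring; apply HH].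
     intros; unfold z; ring. unfold z; ring. }
   assert (Hzt : 0 < z 0%nat t).
   { apply (barrier 1 z 0); auto.
     - intros j s Hj Hs. replace j with 0%nat by lia. eapply deriv_rcont; eauto.
     - intros j Hj. replace j with 0%nat by lia. unfold z. rewrite H0 by auto. specialize (Hx0 i Hi). lra.
     - intros T HT Hall j Hj HzT. replace j with 0%nat in * by lia.
       destruct (deriv_left_sign (z 0%nat) T _ HT (Hz T ltac:(lra))) as [dl [Hdl H1]].
       { unfold z in HzT. assert (HxT : x T i < 0) by nra.
         unfold Fc. rewrite cl_neg by auto.
         assert (0 <= mv n B (fun j => cl (x T j)) i) by (apply mv_nonneg; auto; intros; apply cl_I01). lra. }
       exists dl; split; auto. intros s Hs Hs0. specialize (H1 s Hs Hs0). lra. }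
   unfold z, e in Hzt. assert (Ht1 : 0 < 1 + t) by lra.
   replace (x t i + - x t i / (2 * (1 + t)) * (1 + t)) with (x t i / 2) in Hzt by (field; lra). lra. }
 assert (Hup : forall i t, (i < n)%nat -> 0 <= t -> x t i <= 1).
 { intros i t Hi Ht. apply Rnot_lt_le. intros Hbig.
   set (e := (x t i - 1) / (2 * (1 + t))).
   assert (He : 0 < e) by (unfold e; apply Rdiv_lt_0_compat; lra).
   set (z := fun (_ : nat) s => 1 + e * (1 + s) - x s i).
   assert (Hz : forall s, 0 <= s -> deriv_on (fun s => 0 <= s) (z 0%nat) s (e - Fc n d B h (x s) i)).
   { intros s Hs. pose proof (deriv_on_lin _ _ _ s _ _ 1 (-1) (deriv_of_pt_lim (fun s => 0 <= s) _ _ _ (lin_der1 e s)) (Hder s i Hs Hi)) as HH.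
     eapply deriv_on_ext; [| | replace (e - Fc n d B h (x s) i) with (1 * e + -1 * Fc n d B h (x s) i) by ring; apply HH].
     intros; unfold z; ring. unfold z; ring. }
   assert (Hzt : 0 < z 0%nat t).
   { apply (barrier 1 z 0); auto.
     - intros j s Hj Hs. replace j with 0%nat by lia. eapply deriv_rcont; eauto.
     - intros j Hj. replace j with 0%nat by lia. unfold z. rewrite H0 by auto. specialize (Hx0 i Hi). lra.
     - intros T HT Hall j Hj HzT. replace j with 0%nat in * by lia.
       destruct (deriv_left_sign (z 0%nat) T _ HT (Hz T ltac:(lra))) as [dl [Hdl H1]].
       { unfold z in HzT. assert (HxT : 1 < x T i) by nra.
         unfold Fc. rewrite cl_big by auto.
         assert (0 <= h i 1) by (apply (Hh i Hi); unfold I01; lra). specialize (Hd i Hi). lra. }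
       exists dl; split; auto. intros s Hs Hs0. specialize (H1 s Hs Hs0). lra. }
   unfold z, e in Hzt. assert (Ht1 : 0 < 1 + t) by lra.
   replace (1 + (x t i - 1) / (2 * (1 + t)) * (1 + t) - x t i) with ((1 - x t i) / 2) in Hzt by (field; lra). lra. }
 exists x. split; auto. intros t Ht.
 assert (HX : in_Xi n (x t)) by (intros i Hi; split; [apply Hlow| apply Hup]; auto).
 split; auto. intros i Hi.
 replace (sis_rhs n d B h (x t) i) with (Fc n d B h (x t) i). apply Hder; auto.
 unfold Fc, sis_rhs. rewrite cl_id by (apply HX; auto). f_equal. f_equal.
 unfold mv. apply vsum_ext. intros j Hj. rewrite cl_id by (apply HX; auto). auto.
Qed.

Theorem theorem4 (n : nat) (d : nat -> R) (B : nat -> nat -> R)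
  (h : nat -> R -> R)
  (Hn : (2 <= n)%nat)
  (Hd : forall i, (i < n)%nat -> 0 < d i)
  (HB : forall i j, (i < n)%nat -> (j < n)%nat -> 0 <= B i j)
  (Hirr : irreducible n B)
  (Hh : forall i, (i < n)%nat -> good_h (h i))
  (Hs : exists s, spectral_abscissa n (mDpB d B) s /\ 0 < s) :
  exists xs : nat -> R,
    (* (1) exactly two equilibria in Xi_n *)
    is_equilibrium n d B h zerov /\
    unstable n d B h zerov /\
    is_equilibrium n d B h xs /\ in_int_Xi n xs /\
    loc_exp_stable n d B h xs /\
    (forall e, is_equilibrium n d B h e -> veq n e zerov \/ veq n e xs) /\
    (* (2) exponential convergence from every nonzero initial state *)
    (forall x, is_solution n d B h x -> ~ veq n (x 0) zerov ->
       exists C gamma, 0 < gamma /\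
         forall t, 0 <= t -> vnorm n (vsub (x t) xs) <= C * exp (- gamma * t)).
Proof.
 assert (Hok : sys_ok n d B h) by (split; [|split]; auto).
 assert (Hn0 : (0 < n)%nat) by lia.
 destruct (exist_nonzero_eq n d B h Hok Hs) as [xs [Hxs Hnz]].
 assert (Hint := eq_interior n d B h xs Hok Hirr Hxs Hnz).
 exists xs. split; [|split; [|split; [|split; [|split; [|split]]]]].
 - split. intros i Hi; unfold zerov; lra.
   intros i Hi. unfold sis_rhs, zerov, mv. rewrite (vsum_ext n _ (fun _ => 0)) by (intros; ring). rewrite vsum_0. ring.
 - apply (unstable0 n d B h xs Hn0 Hok Hirr Hxs Hint). apply exists_solution; auto.
 - auto.
 - auto.
 - apply loc_stab; auto.
 - intros e He. destruct (classic (veq n e zerov)) as [H|H]; [left; auto| right]. apply (uniq_eq n d B h xs e); auto.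
 - intros x Hsol Hx. apply (global_conv n d B h xs x); auto.
Qed.
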